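(* Let $f$ be an infinitely differentiable real-valued function on $\mathbb{R}^2$ supported in a compact set contained in the open half-plane $\{(x,y):y>0\}$. Then there exist real polynomials (1) $A_{2k,2i}(t)=\sum_{j=1}^{k+i}A_j(2k,2i)\,t^{2j-1}$ on $[0,1]$, for integers $k\ge1$ and $0\le i\le k$, and (2) $B_{2k-1,2i-1}(t)=\sum_{j=1}^{k+i-1}B_j(2k-1,2i-1)\,t^{2j-1}$ on $[0,1]$, for integers $k\ge1$ and $1\le i\le k$, such that for all $p\in\mathbb{R}$, $r>0$ and $k\ge1$, $$a_{2k}(p,r)=2\,Mf(p,r)+\int_0^r\sum_{i=0}^{k} r^{2i-1}A_{2k,2i}(u/r)\,\frac{\partial^{2i}}{\partial p^{2i}}Mf(p,u)\,du$$ and $$b_{2k-1}(p,r)=\int_0^r\sum_{i=1}^{k} r^{2(i-1)}B_{2k-1,2i-1}(u/r)\,\frac{\partial^{2i-1}}{\partial p^{2i-1}}Mf(p,u)\,du.$$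
   Context: Use Cartesian coordinates on $\mathbb{R}^2$ in which the line $L$ is the $x$-axis. For $p\in\mathbb{R}$, $r\ge0$ and $\varphi\in[-\pi,\pi]$ write $f(p,r,\varphi)=f(p+r\sin\varphi,\,r\cos\varphi)$ for the restriction of $f$ to the circle of radius $r$ centered at $(p,0)$, with $\varphi$ the angular coordinate measured from the direction perpendicular to $L$. Define $Mf(p,r)=\frac{1}{2\pi}\int_{-\pi}^{\pi}f(p,r,\varphi)\,d\varphi$ and the Fourier coefficients $a_k(p,r)=\frac1\pi\int_{-\pi}^{\pi}f(p,r,\varphi)\cos(k\varphi)\,d\varphi$, $b_k(p,r)=\frac1\pi\int_{-\pi}^{\pi}f(p,r,\varphi)\sin(k\varphi)\,d\varphi$ for $k\ge1$. For $i=0$ the $0$-th derivative is $Mf$ itself. *)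

(* Defs.v *)
From Stdlib Require Import Reals List.
From Coquelicot Require Import Coquelicot.
Open Scope R_scope.

(* Iterated partial derivatives of g : R -> R -> R.
   [true] = derivative in the first variable x, [false] = in the second y.
   The head of the list is the last derivative applied. *)
Fixpoint pdiff (l : list bool) (g : R -> R -> R) : R -> R -> R :=
  match l with
  | nil => g
  | b :: l' =>
      let h := pdiff l' g in
      if b then (fun x y => Derive (fun t => h t y) x)
      else (fun x y => Derive (fun t => h x t) y)
  end.

Definition smooth2 (g : R -> R -> R) : Prop :=
  forall (l : list bool) (x y : R),
    ex_derive (fun t => pdiff l g t y) x /\
    ex_derive (fun t => pdiff l g x t) y /\
    continuous (fun z : R * R => pdiff l g (fst z) (snd z)) (x, y).

(* The support of g is contained in a compact subset of the open upper
   half-plane {y > 0}: equivalently, in a rectangle [a,b] x [c,d] with c > 0. *)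
Definition compact_supp_upper (g : R -> R -> R) : Prop :=
  exists a b c d : R, 0 < c /\
    forall x y, ~ (a <= x <= b /\ c <= y <= d) -> g x y = 0.

Definition fcirc (f : R -> R -> R) (p r phi : R) : R :=
  f (p + r * sin phi) (r * cos phi).

Definition Mf (f : R -> R -> R) (p r : R) : R :=
  / (2 * PI) * RInt (fun phi => fcirc f p r phi) (- PI) PI.

Definition a_coef (f : R -> R -> R) (k : nat) (p r : R) : R :=
  / PI * RInt (fun phi => fcirc f p r phi * cos (INR k * phi)) (- PI) PI.

Definition b_coef (f : R -> R -> R) (k : nat) (p r : R) : R :=
  / PI * RInt (fun phi => fcirc f p r phi * sin (INR k * phi)) (- PI) PI.

Definition dpMf (f : R -> R -> R) (i : nat) (p u : R) : R :=
  Derive_n (fun q => Mf f q u) i p.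

Definition oddpoly (c : nat -> R) (n : nat) (t : R) : R :=
  sum_n_m (fun j => c j * t ^ (2 * j - 1)) 1 n.

(* Main.v *)
Require Import Defs.
From Stdlib Require Import Reals ZArith Lra Lia List.
From Coquelicot Require Import Coquelicot.
Open Scope R_scope.


Definition dx (g : R -> R -> R) : R -> R -> R := fun x y => Derive (fun t => g t y) x.
Definition dy (g : R -> R -> R) : R -> R -> R := fun x y => Derive (fun t => g x t) y.

Lemma pdiff_app l1 l2 g : pdiff (l1 ++ l2) g = pdiff l1 (pdiff l2 g).
Proof. induction l1 as [|b l1 IH]; simpl; auto. rewrite IH. reflexivity. Qed.

Lemma smooth_dx g : smooth2 g -> smooth2 (dx g).
Proof.
  intros H l x y. specialize (H (l ++ true :: nil) x y).
  rewrite pdiff_app in H. exact H.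
Qed.

Lemma smooth_dy g : smooth2 g -> smooth2 (dy g).
Proof.
  intros H l x y. specialize (H (l ++ false :: nil) x y).
  rewrite pdiff_app in H. exact H.
Qed.

Lemma smooth_cont g : smooth2 g -> forall z : R * R,
  continuous (fun z : R * R => g (fst z) (snd z)) z.
Proof. intros H [x y]. exact (proj2 (proj2 (H nil x y))). Qed.

Lemma smooth_exdx g x y : smooth2 g -> ex_derive (fun t => g t y) x.
Proof. intros H. exact (proj1 (H nil x y)). Qed.

Lemma smooth_exdy g x y : smooth2 g -> ex_derive (fun t => g x t) y.
Proof. intros H. exact (proj1 (proj2 (H nil x y))). Qed.

Lemma smooth_cont2d g x y : smooth2 g -> continuity_2d_pt g x y.
Proof.
  intros H. apply continuity_2d_pt_filterlim. exact (smooth_cont g H (x, y)).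
Qed.

Lemma smooth_ex_diff n : forall g, smooth2 g -> forall x y, ex_diff_n g n x y.
Proof.
  induction n as [|n IH]; intros g H x y; simpl.
  - split; [apply smooth_cont2d; auto| exact I].
  - split; [apply smooth_cont2d; auto|].
    split; [apply smooth_exdx; auto|].
    split; [apply smooth_exdy; auto|].
    split.
    + apply (IH (dx g)). apply smooth_dx; auto.
    + apply (IH (dy g)). apply smooth_dy; auto.
Qed.

Lemma smooth_diff g x y : smooth2 g ->
  differentiable_pt_lim g x y (dx g x y) (dy g x y).
Proof.
  intros H.
  destruct (Taylor_Lagrange_2d g 1 x y) as [D HD].
  { exists (mkposreal 1 Rlt_0_1). intros. apply smooth_ex_diff; auto. }
  intros eps.
  destruct HD as [d0 Hd0].
  assert (Hp : 0 < Rmin d0 (eps / (Rabs D + 1))).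
  { apply Rmin_pos. apply cond_pos. apply Rdiv_lt_0_compat. apply cond_pos.
    pose proof (Rabs_pos D); lra. }
  exists (mkposreal _ Hp). intros u v Hu Hv. simpl in Hu, Hv.
  assert (Hu0 : Rabs (u - x) < d0) by (eapply Rlt_le_trans; [exact Hu| apply Rmin_l]).
  assert (Hv0 : Rabs (v - y) < d0) by (eapply Rlt_le_trans; [exact Hv| apply Rmin_l]).
  specialize (Hd0 u v Hu0 Hv0).
  assert (E : DL_pol 1 g x y (u - x) (v - y) = g x y + (dx g x y * (u - x) + dy g x y * (v - y))).
  { unfold DL_pol, differential. simpl. unfold C. simpl.
    unfold partial_derive. simpl. unfold dx, dy. unfold Binomial.C; simpl. field. }
  rewrite E in Hd0.
  set (M := Rmax (Rabs (u - x)) (Rabs (v - y))) in *.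
  assert (HM0 : 0 <= M) by (unfold M; eapply Rle_trans; [apply Rabs_pos| apply Rmax_l]).
  assert (HM : M <= eps / (Rabs D + 1)).
  { unfold M. apply Rmax_lub; left; eapply Rlt_le_trans; try apply Rmin_r; eauto. }
  replace (g u v - g x y - (dx g x y * (u - x) + dy g x y * (v - y)))
    with (g u v - (g x y + (dx g x y * (u - x) + dy g x y * (v - y)))) by ring.
  eapply Rle_trans; [exact Hd0|].
  assert (D * M ^ 2 <= Rabs D * M * M).
  { simpl. rewrite Rmult_1_r. rewrite <- Rmult_assoc.
    apply Rmult_le_compat_r; auto. apply Rmult_le_compat_r; auto. apply Rle_abs. }
  eapply Rle_trans; [exact H0|].
  apply Rmult_le_compat_r; auto.
  assert (HD1: 0 < Rabs D + 1) by (pose proof (Rabs_pos D); lra).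
  apply (Rmult_le_compat_l (Rabs D)) in HM; [|apply Rabs_pos].
  eapply Rle_trans; [exact HM|].
  unfold Rdiv. rewrite <- Rmult_assoc.
  rewrite (Rmult_comm (Rabs D) eps). rewrite Rmult_assoc.
  rewrite <- (Rmult_1_r eps) at 2. apply Rmult_le_compat_l. left; apply cond_pos.
  apply (Rmult_le_reg_r (Rabs D + 1)); auto.
  rewrite Rmult_assoc, Rinv_l; lra.
Qed.

Ltac req := match goal with |- @eq _ ?a ?b => change (@eq R a b) end.

Lemma dpl_eq f x l l' : derivable_pt_lim f x l' -> l' = l -> derivable_pt_lim f x l.
Proof. intros H ->; exact H. Qed.

Lemma is_derive_eq (f : R -> R) x l l' : is_derive f x l' -> l' = l -> is_derive f x l.
Proof. intros H ->; exact H. Qed.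


Lemma isd_plus (f h : R -> R) x a b : is_derive f x a -> is_derive h x b ->
  is_derive (fun y => f y + h y) x (a + b).
Proof. intros; apply (is_derive_plus f h); auto. Qed.
Lemma isd_minus (f h : R -> R) x a b : is_derive f x a -> is_derive h x b ->
  is_derive (fun y => f y - h y) x (a - b).
Proof. intros; apply (is_derive_minus f h); auto. Qed.
Lemma isd_mult (f h : R -> R) x a b : is_derive f x a -> is_derive h x b ->
  is_derive (fun y => f y * h y) x (a * h x + f x * b).
Proof. intros; apply (is_derive_mult f h); auto. intros; apply Rmult_comm. Qed.
Lemma isd_const (c : R) x : is_derive (fun _ => c) x 0.
Proof. apply (is_derive_const c). Qed.
Lemma isd_id x : is_derive (fun y : R => y) x 1.
Proof. apply (is_derive_id x). Qed.
Lemma isd_scal (f : R -> R) x k a : is_derive f x a -> is_derive (fun y => k * f y) x (k * a).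
Proof. apply is_derive_scal. Qed.
Lemma isd_comp (f h : R -> R) x a b : is_derive f (h x) a -> is_derive h x b ->
  is_derive (fun y => f (h y)) x (b * a).
Proof. intros; apply (is_derive_comp f h); auto. Qed.

Lemma cont_comp2 g (H : smooth2 g) {U : UniformSpace} (X Y : U -> R) z :
  continuous X z -> continuous Y z -> continuous (fun z => g (X z) (Y z)) z.
Proof.
  intros HX HY. apply (continuous_comp_2 X Y g z HX HY (smooth_cont g H (X z, Y z))).
Qed.

Lemma cont_R2_fst (z : R * R) : continuous (fun z : R * R => fst z) z.
Proof. destruct z; apply continuous_fst. Qed.
Lemma cont_R2_snd (z : R * R) : continuous (fun z : R * R => snd z) z.
Proof. destruct z; apply continuous_snd. Qed.

Lemma cont_mult {U : UniformSpace} (f h : U -> R) z :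
  continuous f z -> continuous h z -> continuous (fun z => f z * h z) z.
Proof. intros; apply (continuous_mult f h); auto. Qed.
Lemma cont_plus {U : UniformSpace} (f h : U -> R) z :
  continuous f z -> continuous h z -> continuous (fun z => f z + h z) z.
Proof. intros; apply (continuous_plus f h); auto. Qed.
Lemma cont_opp {U : UniformSpace} (f : U -> R) z :
  continuous f z -> continuous (fun z => - f z) z.
Proof. intros; apply (continuous_opp f); auto. Qed.
Lemma cont_minus {U : UniformSpace} (f h : U -> R) z :
  continuous f z -> continuous h z -> continuous (fun z => f z - h z) z.
Proof. intros; apply cont_plus; auto; apply cont_opp; auto. Qed.
Lemma cont_const {U : UniformSpace} (c : R) (z : U) : continuous (fun _ => c) z.
Proof. apply continuous_const. Qed.
Lemma cont_sin {U : UniformSpace} (f : U -> R) z : continuous f z -> continuous (fun z => sin (f z)) z.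
Proof. intros; apply (continuous_comp f sin); auto; apply continuous_sin. Qed.
Lemma cont_cos {U : UniformSpace} (f : U -> R) z : continuous f z -> continuous (fun z => cos (f z)) z.
Proof. intros; apply (continuous_comp f cos); auto; apply continuous_cos. Qed.

Lemma fcirc_cont_pphi g (H : smooth2 g) r (z : R * R) :
  continuous (fun z : R * R => fcirc g (fst z) r (snd z)) z.
Proof.
  unfold fcirc. apply cont_comp2; auto.
  - apply cont_plus. apply cont_R2_fst. apply cont_mult. apply cont_const. apply cont_sin, cont_R2_snd.
  - apply cont_mult. apply cont_const. apply cont_cos, cont_R2_snd.
Qed.

Lemma fcirc_cont_rphi g (H : smooth2 g) p (z : R * R) :
  continuous (fun z : R * R => fcirc g p (fst z) (snd z)) z.
Proof.
  unfold fcirc. apply cont_comp2; auto.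
  - apply cont_plus. apply cont_const. apply cont_mult. apply cont_R2_fst. apply cont_sin, cont_R2_snd.
  - apply cont_mult. apply cont_R2_fst. apply cont_cos, cont_R2_snd.
Qed.

Lemma fcirc_cont_phi g (H : smooth2 g) p r (t : R) :
  continuous (fun t => fcirc g p r t) t.
Proof.
  unfold fcirc. apply cont_comp2; auto.
  - apply cont_plus. apply cont_const. apply cont_mult. apply cont_const. apply cont_sin, continuous_id.
  - apply cont_mult. apply cont_const. apply cont_cos, continuous_id.
Qed.

Lemma fcirc_cont_r g (H : smooth2 g) p t (r : R) :
  continuous (fun r => fcirc g p r t) r.
Proof.
  unfold fcirc. apply cont_comp2; auto.
  - apply cont_plus. apply cont_const. apply cont_mult. apply continuous_id. apply cont_const.
  - apply cont_mult. apply continuous_id. apply cont_const.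
Qed.

Lemma fcirc_dp g (H : smooth2 g) q r t :
  is_derive (fun u => fcirc g u r t) q (fcirc (dx g) q r t).
Proof.
  unfold fcirc.
  pose proof (Derive_correct _ _ (smooth_exdx g (q + r * sin t) (r * cos t) H)) as Hd.
  apply is_derive_eq with (l' := 1 * Derive (fun s => g s (r * cos t)) (q + r * sin t)).
  - apply (isd_comp (fun s => g s (r * cos t)) (fun u => u + r * sin t)); auto.
    apply is_derive_eq with (l' := 1 + 0).
    + apply isd_plus. apply isd_id. apply isd_const.
    + change (1 + 0 = 1)%R; ring.
  - unfold dx. req. ring.
Qed.

Lemma fcirc_dr g (H : smooth2 g) q r t :
  is_derive (fun s => fcirc g q s t) r
    (sin t * fcirc (dx g) q r t + cos t * fcirc (dy g) q r t).
Proof.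
  unfold fcirc. apply is_derive_Reals.
  pose proof (smooth_diff g (q + r * sin t) (r * cos t) H) as Hd.
  apply dpl_eq with (l' := dx g (q + r * sin t) (r * cos t) * sin t +
                               dy g (q + r * sin t) (r * cos t) * cos t).
  2: ring.
  apply (derivable_pt_lim_comp_2d g (fun s => q + s * sin t) (fun s => s * cos t)); auto.
  - apply is_derive_Reals. apply is_derive_eq with (l' := 0 + (1 * sin t + r * 0)).
    apply (isd_plus (fun _ => q) (fun s => s * sin t)). apply isd_const. apply (isd_mult (fun s => s) (fun _ => sin t)). apply isd_id. apply isd_const.
    req; ring.
  - apply is_derive_Reals. apply is_derive_eq with (l' := 1 * cos t + r * 0).
    apply (isd_mult (fun s => s) (fun _ => cos t)). apply isd_id. apply isd_const. req; ring.
Qed.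

Lemma fcirc_dphi g (H : smooth2 g) q r t :
  is_derive (fun s => fcirc g q r s) t
    (r * cos t * fcirc (dx g) q r t - r * sin t * fcirc (dy g) q r t).
Proof.
  unfold fcirc. apply is_derive_Reals.
  pose proof (smooth_diff g (q + r * sin t) (r * cos t) H) as Hd.
  apply dpl_eq with (l' := dx g (q + r * sin t) (r * cos t) * (r * cos t) +
                               dy g (q + r * sin t) (r * cos t) * (r * - sin t)).
  2: ring.
  apply (derivable_pt_lim_comp_2d g (fun s => q + r * sin s) (fun s => r * cos s)); auto.
  - apply is_derive_Reals. apply is_derive_eq with (l' := 0 + (r * cos t)).
    apply (isd_plus (fun _ => q) (fun s => r * sin s)). apply isd_const. apply isd_scal. apply is_derive_sin.
    req; ring.
  - apply is_derive_Reals. apply is_derive_scal. apply is_derive_cos.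
Qed.

Definition Cont (f : R -> R) := forall x, continuous f x.

Lemma exRI (f : R -> R) a b : Cont f -> ex_RInt f a b.
Proof. intros H; apply (ex_RInt_continuous (V := R_CompleteNormedModule)); intros; apply H. Qed.

Lemma RInt_lin2 (f h : R -> R) a b c1 c2 : Cont f -> Cont h ->
  RInt (fun x => c1 * f x + c2 * h x) a b = c1 * RInt f a b + c2 * RInt h a b.
Proof.
  intros Hf Hh. apply (is_RInt_unique (V := R_CompleteNormedModule)).
  apply (is_RInt_plus (V := R_NormedModule) (fun x => c1 * f x) (fun x => c2 * h x)).
  - apply (is_RInt_scal (V := R_NormedModule) f). apply (RInt_correct (V := R_CompleteNormedModule)), exRI; auto.
  - apply (is_RInt_scal (V := R_NormedModule) h). apply (RInt_correct (V := R_CompleteNormedModule)), exRI; auto.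
Qed.

Lemma RInt_scal' (f : R -> R) a b c : Cont f -> RInt (fun x => c * f x) a b = c * RInt f a b.
Proof.
  intros Hf. apply (is_RInt_unique (V := R_CompleteNormedModule)). apply (is_RInt_scal (V := R_NormedModule) f). apply (RInt_correct (V := R_CompleteNormedModule)), exRI; auto.
Qed.

Lemma RInt_ext' (f h : R -> R) a b : (forall x, f x = h x) -> RInt f a b = RInt h a b.
Proof. intros H; apply (RInt_ext (V := R_CompleteNormedModule)); intros; auto. Qed.

Lemma Cont_mult f h : Cont f -> Cont h -> Cont (fun x => f x * h x).
Proof. intros Hf Hh x; apply cont_mult; auto. Qed.
Lemma Cont_plus f h : Cont f -> Cont h -> Cont (fun x => f x + h x).
Proof. intros Hf Hh x; apply cont_plus; auto. Qed.
Lemma Cont_const c : Cont (fun _ => c).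
Proof. intros x; apply cont_const. Qed.
Lemma Cont_cs k : Cont (fun t => cos (INR k * t)).
Proof. intros x; apply cont_cos, cont_mult; [apply cont_const | apply continuous_id]. Qed.
Lemma Cont_sn k : Cont (fun t => sin (INR k * t)).
Proof. intros x; apply cont_sin, cont_mult; [apply cont_const | apply continuous_id]. Qed.
Lemma Cont_sin : Cont sin.
Proof. intros x; apply continuous_sin. Qed.
Lemma Cont_cos : Cont cos.
Proof. intros x; apply continuous_cos. Qed.

Lemma param_deriv (F dF : R -> R -> R) a b x :
  (forall u t, is_derive (fun s => F s t) u (dF u t)) ->
  (forall z : R * R, continuous (fun z : R * R => dF (fst z) (snd z)) z) ->
  (forall u, Cont (F u)) ->
  is_derive (fun s => RInt (F s) a b) x (RInt (dF x) a b).
Proof.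
  intros Hd Hc HF.
  apply is_derive_eq with (RInt (fun t => Derive (fun u => F u t) x) a b).
  - apply (is_derive_RInt_param F a b x).
    + apply filter_forall. intros y t _. exists (dF y t); auto.
    + intros t _. apply continuity_2d_pt_ext with (fun u v => dF u v).
      * intros; symmetry; apply is_derive_unique; auto.
      * apply continuity_2d_pt_filterlim. apply (Hc (x, t)).
    + apply filter_forall. intros y. apply exRI; auto.
  - apply RInt_ext'. intros t. apply is_derive_unique; auto.
Qed.

Definition Iw g p r (w : R -> R) := RInt (fun t => fcirc g p r t * w t) (- PI) PI.
Definition Ir g p r (w : R -> R) :=
  RInt (fun t => (sin t * fcirc (dx g) p r t + cos t * fcirc (dy g) p r t) * w t) (- PI) PI.

Lemma Cont_fcirc g (H : smooth2 g) p r : Cont (fun t => fcirc g p r t).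
Proof. intros t; apply fcirc_cont_phi; auto. Qed.

Lemma Cont_snd (w : R -> R) (Hw : Cont w) (z : R * R) : continuous (fun z : R * R => w (snd z)) z.
Proof. apply (continuous_comp (fun z : R * R => snd z) w). apply cont_R2_snd. apply Hw. Qed.

Lemma Iw_dp g (H : smooth2 g) w (Hw : Cont w) p r :
  is_derive (fun q => Iw g q r w) p (Iw (dx g) p r w).
Proof.
  unfold Iw.
  apply (param_deriv (fun q t => fcirc g q r t * w t) (fun q t => fcirc (dx g) q r t * w t)).
  - intros u t. apply is_derive_eq with (fcirc (dx g) u r t * w t + fcirc g u r t * 0).
    apply (isd_mult (fun s => fcirc g s r t) (fun _ => w t)). apply fcirc_dp; auto. apply isd_const.
    req; ring.
  - intros z. apply cont_mult. apply fcirc_cont_pphi, smooth_dx; auto. apply Cont_snd; auto.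
  - intros u. apply Cont_mult; auto. apply Cont_fcirc; auto.
Qed.

Lemma Iw_dr g (H : smooth2 g) w (Hw : Cont w) p r :
  is_derive (fun s => Iw g p s w) r (Ir g p r w).
Proof.
  unfold Iw, Ir.
  apply (param_deriv (fun s t => fcirc g p s t * w t)
     (fun s t => (sin t * fcirc (dx g) p s t + cos t * fcirc (dy g) p s t) * w t)).
  - intros u t. apply is_derive_eq with ((sin t * fcirc (dx g) p u t + cos t * fcirc (dy g) p u t) * w t + fcirc g p u t * 0).
    apply (isd_mult (fun s => fcirc g p s t) (fun _ => w t)). apply fcirc_dr; auto. apply isd_const.
    req; ring.
  - intros z. apply cont_mult. apply cont_plus; apply cont_mult.
    apply cont_sin, cont_R2_snd. apply fcirc_cont_rphi, smooth_dx; auto.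
    apply cont_cos, cont_R2_snd. apply fcirc_cont_rphi, smooth_dy; auto.
    apply Cont_snd; auto.
  - intros u. apply Cont_mult; auto. apply Cont_fcirc; auto.
Qed.

Lemma Iw_lin g (H : smooth2 g) p r w1 w2 c1 c2 : Cont w1 -> Cont w2 ->
  Iw g p r (fun t => c1 * w1 t + c2 * w2 t) = c1 * Iw g p r w1 + c2 * Iw g p r w2.
Proof.
  intros H1 H2. unfold Iw. rewrite <- RInt_lin2.
  - apply RInt_ext'. intros; ring.
  - apply Cont_mult; auto. apply Cont_fcirc; auto.
  - apply Cont_mult; auto. apply Cont_fcirc; auto.
Qed.

Lemma Cont_Fr g (H : smooth2 g) p r : Cont (fun t => sin t * fcirc (dx g) p r t + cos t * fcirc (dy g) p r t).
Proof.
  apply Cont_plus; apply Cont_mult; try apply Cont_sin; try apply Cont_cos; apply Cont_fcirc.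
  apply smooth_dx; auto. apply smooth_dy; auto.
Qed.

Lemma Ir_lin g (H : smooth2 g) p r w1 w2 c1 c2 : Cont w1 -> Cont w2 ->
  Ir g p r (fun t => c1 * w1 t + c2 * w2 t) = c1 * Ir g p r w1 + c2 * Ir g p r w2.
Proof.
  intros H1 H2. unfold Ir. rewrite <- RInt_lin2.
  - apply RInt_ext'. intros; ring.
  - apply Cont_mult; auto. apply Cont_Fr; auto.
  - apply Cont_mult; auto. apply Cont_Fr; auto.
Qed.

Lemma Iw_ext g p r w1 w2 : (forall t, w1 t = w2 t) -> Iw g p r w1 = Iw g p r w2.
Proof. intros E; unfold Iw; apply RInt_ext'; intros; rewrite E; auto. Qed.
Lemma Ir_ext g p r w1 w2 : (forall t, w1 t = w2 t) -> Ir g p r w1 = Ir g p r w2.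
Proof. intros E; unfold Ir; apply RInt_ext'; intros; rewrite E; auto. Qed.

Lemma key g (H : smooth2 g) p r w sw dv : r <> 0 -> Cont w -> Cont sw -> Cont dv ->
  (forall t, sin t * w t = sw t) ->
  (forall t, is_derive (fun s => cos s * w s) t (dv t)) ->
  cos (- PI) * w (- PI) = cos PI * w PI ->
  Iw (dx g) p r w = Ir g p r sw - / r * Iw g p r dv.
Proof.
  intros Hr Hw Hsw Hdv Esw Ddv Eper.
  set (F := fun t => fcirc g p r t).
  set (Fp := fun t => r * cos t * fcirc (dx g) p r t - r * sin t * fcirc (dy g) p r t).
  assert (CF : Cont F) by (apply Cont_fcirc; auto).
  assert (CFp : Cont Fp).
  { unfold Fp. intros x. apply cont_minus; apply cont_mult; try apply cont_mult; try apply cont_const;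
    try apply continuous_cos; try apply continuous_sin; apply fcirc_cont_phi.
    apply smooth_dx; auto. apply smooth_dy; auto. }
  set (v := fun s => cos s * w s).
  assert (Cv : Cont v) by (apply Cont_mult; auto; apply Cont_cos).
  assert (IBP : RInt (fun t => Fp t * v t) (- PI) PI = - RInt (fun t => F t * dv t) (- PI) PI).
  { assert (E0 : RInt (fun t => 1 * (Fp t * v t) + 1 * (F t * dv t)) (- PI) PI = 0).
    { apply (is_RInt_unique (V := R_CompleteNormedModule)).
      apply (is_RInt_ext (V := R_NormedModule)) with (fun t => Fp t * v t + F t * dv t).
      { intros; req; ring. }
      replace 0 with (minus (F PI * v PI) (F (- PI) * v (- PI))).
      2: { unfold F, v, fcirc. rewrite sin_neg, cos_neg, sin_PI.
           unfold v in Eper. rewrite cos_neg in Eper. rewrite <- Eper.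
           unfold minus, plus, opp; simpl. replace (- 0) with 0 by ring. ring. }
      apply (is_RInt_derive (V := R_CompleteNormedModule) (fun t => F t * v t)).
      - intros x _. apply is_derive_eq with (Fp x * v x + F x * dv x).
        apply isd_mult. apply fcirc_dphi; auto. apply Ddv. auto.
      - intros x _. apply cont_plus; apply cont_mult; auto. }
    rewrite RInt_lin2 in E0.
    - lra.
    - apply Cont_mult; auto.
    - apply Cont_mult; auto. }
  assert (Hpt : forall t, fcirc (dx g) p r t * w t =
     1 * ((sin t * fcirc (dx g) p r t + cos t * fcirc (dy g) p r t) * sw t) + / r * (Fp t * v t)).
  { intros t. rewrite Rmult_1_l. rewrite <- Esw. unfold Fp, v.
    set (X := fcirc (dx g) p r t). set (Y := fcirc (dy g) p r t).
    assert (E1 : / r * ((r * cos t * X - r * sin t * Y) * (cos t * w t)) = (cos t * X - sin t * Y) * (cos t * w t)) by (field; auto).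
    rewrite E1. pose proof (sin2_cos2 t) as H0. unfold Rsqr in H0.
    transitivity (X * w t * (sin t * sin t + cos t * cos t)); [rewrite H0; ring | ring]. }
  unfold Iw at 1. rewrite (RInt_ext' _ _ _ _ Hpt).
  rewrite (RInt_lin2 (fun t => (sin t * fcirc (dx g) p r t + cos t * fcirc (dy g) p r t) * sw t)
              (fun t => Fp t * v t) _ _ 1 (/ r)) .
  2: { apply Cont_mult; auto. apply Cont_Fr; auto. }
  2: { apply Cont_mult; auto. }
  rewrite IBP. unfold Ir, Iw, F. req; ring.
Qed.

Definition cs (k : nat) (t : R) := cos (INR k * t).
Definition sn (k : nat) (t : R) := sin (INR k * t).

Lemma sin_kPI k : sin (INR k * PI) = 0.
Proof.
  induction k as [|k IH]. simpl. rewrite Rmult_0_l; apply sin_0.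
  rewrite S_INR. replace ((INR k + 1) * PI) with (INR k * PI + PI) by ring.
  rewrite sin_plus, IH, sin_PI. ring.
Qed.

Lemma INR_m1 n t : INR n * t = INR (S n) * t - t.
Proof. rewrite S_INR; ring. Qed.
Lemma INR_p2 n t : INR (S (S n)) * t = INR (S n) * t + t.
Proof. rewrite (S_INR (S n)); ring. Qed.

Lemma cos_m b t : cos (b - t) = cos b * cos t + sin b * sin t.
Proof. unfold Rminus. rewrite cos_plus, cos_neg, sin_neg. ring. Qed.
Lemma sin_m b t : sin (b - t) = sin b * cos t - cos b * sin t.
Proof. unfold Rminus. rewrite sin_plus, cos_neg, sin_neg. ring. Qed.

Lemma Iw_scal g (H : smooth2 g) p r w c : Cont w -> Iw g p r (fun t => c * w t) = c * Iw g p r w.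
Proof.
  intros Hw. unfold Iw. rewrite <- RInt_scal'.
  - apply RInt_ext'; intros; ring.
  - apply Cont_mult; auto. apply Cont_fcirc; auto.
Qed.

Lemma rel_S g (H : smooth2 g) p r n : r <> 0 ->
  Iw (dx g) p r (sn (S n)) =
    / 2 * Ir g p r (cs n) + (- / 2) * Ir g p r (cs (S (S n)))
    - / r * (INR n / 2 * Iw g p r (cs n) + INR (S (S n)) / 2 * Iw g p r (cs (S (S n)))).
Proof.
  intros Hr.
  rewrite (key g H p r (sn (S n)) (fun t => / 2 * cs n t + (- / 2) * cs (S (S n)) t)
                 (fun t => INR n / 2 * cs n t + INR (S (S n)) / 2 * cs (S (S n)) t)); auto.
  - rewrite Ir_lin, Iw_lin; auto; apply Cont_cs.
  - apply Cont_sn.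
  - apply Cont_plus; apply Cont_mult; try apply Cont_const; apply Cont_cs.
  - apply Cont_plus; apply Cont_mult; try apply Cont_const; apply Cont_cs.
  - intros t. unfold cs, sn. rewrite (INR_m1 n t), (INR_p2 n t). rewrite cos_m, cos_plus. field.
  - intros t. unfold cs, sn.
    apply is_derive_eq with (- sin t * sin (INR (S n) * t) + cos t * (INR (S n) * cos (INR (S n) * t))).
    + apply (isd_mult cos (fun s => sin (INR (S n) * s))). apply is_derive_cos.
      apply is_derive_eq with (INR (S n) * cos (INR (S n) * t)).
      * apply (isd_comp sin (fun s => INR (S n) * s)). apply is_derive_sin.
        apply is_derive_eq with (INR (S n) * 1). apply isd_scal, isd_id. req; ring.
      * req; ring.
    + rewrite (INR_m1 n t), (INR_p2 n t). rewrite cos_m, cos_plus. rewrite (S_INR (S n)), (S_INR n). req. field.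
  - unfold sn. rewrite cos_neg. replace (INR (S n) * - PI) with (- (INR (S n) * PI)) by ring.
    rewrite sin_neg, sin_kPI. ring.
Qed.

Lemma rel_C g (H : smooth2 g) p r n : r <> 0 ->
  Iw (dx g) p r (cs (S n)) =
    / 2 * Ir g p r (sn (S (S n))) + (- / 2) * Ir g p r (sn n)
    - / r * ((- INR (S (S n)) / 2) * Iw g p r (sn (S (S n))) + (- INR n / 2) * Iw g p r (sn n)).
Proof.
  intros Hr.
  rewrite (key g H p r (cs (S n)) (fun t => / 2 * sn (S (S n)) t + (- / 2) * sn n t)
                 (fun t => (- INR (S (S n)) / 2) * sn (S (S n)) t + (- INR n / 2) * sn n t)); auto.
  - rewrite Ir_lin, Iw_lin; auto; apply Cont_sn.
  - apply Cont_cs.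
  - apply Cont_plus; apply Cont_mult; try apply Cont_const; apply Cont_sn.
  - apply Cont_plus; apply Cont_mult; try apply Cont_const; apply Cont_sn.
  - intros t. unfold cs, sn. rewrite (INR_m1 n t), (INR_p2 n t). rewrite sin_m, sin_plus. field.
  - intros t. unfold cs, sn.
    apply is_derive_eq with (- sin t * cos (INR (S n) * t) + cos t * (INR (S n) * - sin (INR (S n) * t))).
    + apply (isd_mult cos (fun s => cos (INR (S n) * s))). apply is_derive_cos.
      apply is_derive_eq with (INR (S n) * - sin (INR (S n) * t)).
      * apply (isd_comp cos (fun s => INR (S n) * s)). apply is_derive_cos.
        apply is_derive_eq with (INR (S n) * 1). apply isd_scal, isd_id. req; ring.
      * req; ring.
    + rewrite (INR_m1 n t), (INR_p2 n t). rewrite sin_m, sin_plus. rewrite (S_INR (S n)), (S_INR n). req. field.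
  - unfold cs. rewrite cos_neg. replace (INR (S n) * - PI) with (- (INR (S n) * PI)) by ring.
    rewrite cos_neg. ring.
Qed.

Lemma rel_C0 g (H : smooth2 g) p r : r <> 0 ->
  Iw (dx g) p r (fun _ => 1) = Ir g p r (sn 1) + / r * Iw g p r (sn 1).
Proof.
  intros Hr.
  rewrite (key g H p r (fun _ => 1) (sn 1) (fun t => -1 * sn 1 t)); auto.
  - rewrite (Iw_scal g H) by apply Cont_sn. match goal with |- ?G => idtac G end; req; ring.
  - apply Cont_const.
  - apply Cont_sn.
  - apply Cont_mult; [apply Cont_const | apply Cont_sn].
  - intros t. unfold sn. simpl. rewrite Rmult_1_l; ring.
  - intros t. unfold sn. simpl.
    apply is_derive_eq with (- sin t * 1 + cos t * 0).
    apply (isd_mult cos (fun _ => 1)). apply is_derive_cos. apply isd_const.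
    req. rewrite Rmult_1_l. ring.
  - rewrite cos_neg; ring.
Qed.

Definition HypC (c : R) (g : R -> R -> R) :=
  smooth2 g /\ 0 < c /\ forall x y, y < c -> g x y = 0.

Lemma HypC_dx c g : HypC c g -> HypC c (dx g).
Proof.
  intros [H1 [H2 H3]]. split; [apply smooth_dx; auto|]. split; auto.
  intros x y Hy. unfold dx. rewrite (Derive_ext _ (fun _ => 0)). apply Derive_const.
  intros t; apply H3; auto.
Qed.

Fixpoint dxn (m : nat) (g : R -> R -> R) : R -> R -> R :=
  match m with O => g | S m => dx (dxn m g) end.

Lemma dxn_dx m g : dxn m (dx g) = dxn (S m) g.
Proof. induction m as [|m IH]; simpl; auto. simpl in IH. rewrite IH. reflexivity. Qed.

Lemma HypC_dxn c m g : HypC c g -> HypC c (dxn m g).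
Proof. induction m; simpl; auto. intros; apply HypC_dx; auto. Qed.

Lemma Mf_Iw g p r : Mf g p r = / (2 * PI) * Iw g p r (fun _ => 1).
Proof. unfold Mf, Iw. f_equal. apply RInt_ext'; intros; ring. Qed.

Lemma a_Iw g n p r : a_coef g n p r = / PI * Iw g p r (cs n).
Proof. reflexivity. Qed.
Lemma b_Iw g n p r : b_coef g n p r = / PI * Iw g p r (sn n).
Proof. reflexivity. Qed.

Lemma Mf_dp g (H : smooth2 g) p u : is_derive (fun q => Mf g q u) p (Mf (dx g) p u).
Proof.
  apply is_derive_ext with (fun q => / (2 * PI) * Iw g q u (fun _ => 1)).
  { intros; symmetry; apply Mf_Iw. }
  rewrite Mf_Iw. apply isd_scal. apply Iw_dp; auto. apply Cont_const.
Qed.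

Definition D g p m u := Mf (dxn m g) p u.

Lemma dpMf_D c g (H : HypC c g) m p u : dpMf g m p u = D g p m u.
Proof.
  unfold dpMf, D. revert p. induction m as [|m IH]; intros p; simpl; auto.
  rewrite (Derive_ext _ (fun q => Mf (dxn m g) q u)); auto.
  apply is_derive_unique. apply Mf_dp. destruct (HypC_dxn c m g H); auto.
Qed.

Lemma D_dx g p m u : D (dx g) p m u = D g p (S m) u.
Proof. unfold D. rewrite dxn_dx. reflexivity. Qed.

Lemma Mf_dr g (H : smooth2 g) p r : is_derive (fun s => Mf g p s) r (/ (2 * PI) * Ir g p r (fun _ => 1)).
Proof.
  apply is_derive_ext with (fun s => / (2 * PI) * Iw g p s (fun _ => 1)).
  { intros; symmetry; apply Mf_Iw. }
  apply isd_scal. apply Iw_dr; auto. apply Cont_const.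
Qed.

Lemma Cont_D c g (H : HypC c g) p m : Cont (D g p m).
Proof.
  intros u. apply (ex_derive_continuous (K := R_AbsRing) (V := R_NormedModule)). unfold D.
  eexists. apply Mf_dr. destruct (HypC_dxn c m g H); auto.
Qed.

Lemma Iw_van c g (H : HypC c g) p r w : Rabs r < c -> Iw g p r w = 0.
Proof.
  intros Hr. destruct H as [_ [_ H]]. unfold Iw.
  rewrite (RInt_ext' _ (fun _ => 0)).
  - rewrite RInt_const. unfold scal; simpl; unfold mult; simpl. ring.
  - intros t. unfold fcirc. rewrite H. ring.
    pose proof (COS_bound t). pose proof (Rabs_pos r).
    destruct (Rle_dec 0 r).
    + rewrite Rabs_right in Hr by lra. nra.
    + rewrite Rabs_left in Hr by lra. nra.
Qed.

Lemma D_van c g (H : HypC c g) p m u : Rabs u < c -> D g p m u = 0.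
Proof.
  intros Hu. unfold D. rewrite Mf_Iw. rewrite (Iw_van c); auto. ring. apply HypC_dxn; auto.
Qed.

Definition Tg (h : R -> R) (n : nat) (r : R) := RInt (fun u => (u / r) ^ n * h u) 0 r.

Lemma Cont_pow n : Cont (fun u => u ^ n).
Proof.
  intros x. apply (ex_derive_continuous (K := R_AbsRing) (V := R_NormedModule) (fun u => u ^ n)).
  exists (INR n * 1 * x ^ Init.Nat.pred n). apply (is_derive_pow (fun y => y) n x 1). apply isd_id.
Qed.

Lemma pow_pred n r : r <> 0 -> INR n * r ^ Init.Nat.pred n = INR n * r ^ n / r.
Proof. intros Hr. destruct n; simpl; field; auto. Qed.

Lemma Tg_deriv h n r : Cont h -> r <> 0 ->
  is_derive (Tg h n) r (h r - INR n / r * Tg h n r).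
Proof.
  intros Hh Hr.
  set (J := fun s => RInt (fun u => u ^ n * h u) 0 s).
  assert (EJ : forall s, s <> 0 -> Tg h n s = / s ^ n * J s).
  { intros s Hs. unfold Tg, J. rewrite <- RInt_scal'.
    - apply RInt_ext'. intros u. unfold Rdiv. rewrite Rpow_mult_distr, pow_inv. ring.
    - apply Cont_mult; auto. apply Cont_pow. }
  assert (DJ : is_derive J r (r ^ n * h r)).
  { unfold J. apply (is_derive_RInt (V := R_CompleteNormedModule) (fun u => u ^ n * h u) (fun s => RInt (fun u => u ^ n * h u) 0 s) 0).
    - apply filter_forall. intros b. apply (RInt_correct (V := R_CompleteNormedModule)).
      apply exRI. apply Cont_mult; auto. apply Cont_pow.
    - apply Cont_mult; auto. apply Cont_pow. }
  assert (Hrn : r ^ n <> 0) by (apply pow_nonzero; auto).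
  apply is_derive_ext_loc with (fun s => / s ^ n * J s).
  - assert (Hpos : 0 < Rabs r) by (apply Rabs_pos_lt; auto).
    exists (mkposreal _ Hpos). intros s Hs. rewrite EJ; auto.
    intros E. rewrite E in Hs. unfold ball in Hs; simpl in Hs. unfold AbsRing_ball, abs, minus, plus, opp in Hs; simpl in Hs.
    rewrite Rplus_0_l, Rabs_Ropp in Hs. lra.
  - apply is_derive_eq with ((- (INR n * 1 * r ^ Init.Nat.pred n) / (r ^ n) ^ 2) * J r + / r ^ n * (r ^ n * h r)).
    + apply (isd_mult (fun s => / s ^ n) J). apply is_derive_inv; auto.
      apply is_derive_pow. apply isd_id. auto.
    + rewrite EJ; auto. req. rewrite Rmult_1_r, pow_pred; auto. field. split; auto.
Qed.

Lemma Tg_van h n r c : (forall u, Rabs u < c -> h u = 0) -> 0 < r < c -> Tg h n r = 0.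
Proof.
  intros Hh Hr. unfold Tg. rewrite (RInt_ext (V := R_CompleteNormedModule) _ (fun _ => 0)).
  - rewrite RInt_const. unfold scal; simpl; unfold mult; simpl. ring.
  - intros x Hx. rewrite Rmin_left in Hx by lra. rewrite Rmax_right in Hx by lra.
    rewrite Hh. req; ring. rewrite Rabs_right; lra.
Qed.

Lemma ssum_plus (f h : nat -> R) m n :
  sum_n_m (fun k => f k + h k) m n = sum_n_m f m n + sum_n_m h m n.
Proof. apply (sum_n_m_plus (G := R_AbelianMonoid)). Qed.
Lemma ssum_scal (f : nat -> R) c m n :
  sum_n_m (fun k => c * f k) m n = c * sum_n_m f m n.
Proof. apply (sum_n_m_mult_l (K := R_Ring)). Qed.
Lemma ssum_scal_r (f : nat -> R) c m n :
  sum_n_m (fun k => f k * c) m n = sum_n_m f m n * c.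
Proof. apply (sum_n_m_mult_r (K := R_Ring)). Qed.
Lemma ssum_ext (f h : nat -> R) m n :
  (forall k, (m <= k <= n)%nat -> f k = h k) -> sum_n_m f m n = sum_n_m h m n.
Proof. apply (sum_n_m_ext_loc (G := R_AbelianMonoid)). Qed.
Lemma ssum_zero (f : nat -> R) m n :
  (forall k, (m <= k <= n)%nat -> f k = 0) -> sum_n_m f m n = 0.
Proof.
  intros H. rewrite (ssum_ext f (fun _ => zero)); auto.
  apply (sum_n_m_const_zero (G := R_AbelianMonoid)).
Qed.
Lemma ssum_Sn (f : nat -> R) m n : (m <= n)%nat -> sum_n_m f m n = f m + sum_n_m f (S m) n.
Proof. intros; apply (sum_Sn_m (G := R_AbelianMonoid)); auto. Qed.
Lemma ssum_nS (f : nat -> R) m n : (m <= S n)%nat -> sum_n_m f m (S n) = sum_n_m f m n + f (S n).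
Proof. intros; apply (sum_n_Sm (G := R_AbelianMonoid)); auto. Qed.
Lemma ssum_nn (f : nat -> R) n : sum_n_m f n n = f n.
Proof. apply (sum_n_n (G := R_AbelianMonoid)). Qed.
Lemma ssum_empty (f : nat -> R) m n : (n < m)%nat -> sum_n_m f m n = 0.
Proof. intros; apply (sum_n_m_zero (G := R_AbelianMonoid)); auto. Qed.
Lemma ssum_shift (f : nat -> R) m n : sum_n_m (fun k => f (S k)) m n = sum_n_m f (S m) (S n).
Proof. apply (sum_n_m_S (G := R_AbelianMonoid)). Qed.

Lemma ssum_extend (f : nat -> R) m n n' : (n <= n')%nat ->
  (forall k, (n < k <= n')%nat -> f k = 0) -> sum_n_m f m n = sum_n_m f m n'.
Proof.
  intros Hn Hz. induction n' as [|n' IH].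
  - assert (n = 0%nat) by lia. subst; auto.
  - destruct (Nat.eq_dec n (S n')) as [->|Hne]; auto.
    destruct (le_lt_dec m (S n')) as [Hm|Hm].
    + rewrite ssum_nS by lia. rewrite Hz by lia. rewrite Rplus_0_r. apply IH; [lia|].
      intros; apply Hz; lia.
    + rewrite !ssum_empty by lia. auto.
Qed.

Lemma isd_sum (f df : nat -> R -> R) m n x :
  (forall k, (m <= k <= n)%nat -> is_derive (f k) x (df k x)) ->
  is_derive (fun y => sum_n_m (fun k => f k y) m n) x (sum_n_m (fun k => df k x) m n).
Proof.
  intros H. induction n as [|n IH].
  - destruct m.
    + apply is_derive_ext with (f 0%nat). intros; rewrite ssum_nn; auto.
      rewrite ssum_nn. apply H; lia.
    + apply is_derive_ext with (fun _ => 0). intros; rewrite ssum_empty; auto; lia.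
      rewrite ssum_empty by lia. apply isd_const.
  - destruct (le_lt_dec m (S n)) as [Hm|Hm].
    + destruct (Nat.eq_dec m (S n)) as [->|Hne].
      * apply is_derive_ext with (f (S n)). intros; rewrite ssum_nn; auto.
        rewrite ssum_nn. apply H; lia.
      * apply is_derive_ext with (fun y => sum_n_m (fun k => f k y) m n + f (S n) y).
        intros; rewrite ssum_nS; auto.
        rewrite ssum_nS by lia. apply isd_plus. apply IH. intros; apply H; lia. apply H; lia.
    + apply is_derive_ext with (fun _ => 0). intros; rewrite ssum_empty; auto; lia.
      rewrite ssum_empty by lia. apply isd_const.
Qed.

Lemma Cont_sum (f : nat -> R -> R) m n : (forall k, Cont (f k)) -> Cont (fun x => sum_n_m (fun k => f k x) m n).
Proof.
  intros H. induction n as [|n IH].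
  - destruct m.
    + intros x. apply (continuous_ext (f 0%nat)). intros; rewrite ssum_nn; auto. apply H.
    + intros x. apply (continuous_ext (fun _ => 0)). intros; rewrite ssum_empty; auto; lia. apply cont_const.
  - destruct (le_lt_dec m (S n)) as [Hm|Hm].
    + destruct (Nat.eq_dec m (S n)) as [->|Hne].
      * intros x. apply (continuous_ext (f (S n))). intros; rewrite ssum_nn; auto. apply H.
      * intros x. apply (continuous_ext (fun y => sum_n_m (fun k => f k y) m n + f (S n) y)).
        intros; rewrite ssum_nS; auto; lia. apply cont_plus; [apply IH | apply H].
    + intros x. apply (continuous_ext (fun _ => 0)). intros; rewrite ssum_empty; auto; lia. apply cont_const.
Qed.

Lemma RInt_sum (f : nat -> R -> R) a b m n : (forall k, Cont (f k)) ->
  RInt (fun x => sum_n_m (fun k => f k x) m n) a b = sum_n_m (fun k => (RInt (f k) a b : R)) m n.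
Proof.
  intros H. induction n as [|n IH].
  - destruct m.
    + rewrite ssum_nn. apply RInt_ext'. intros; rewrite ssum_nn; auto.
    + rewrite ssum_empty by lia. rewrite (RInt_ext' _ (fun _ => 0)).
      rewrite RInt_const. unfold scal; simpl; unfold mult; simpl; ring.
      intros; rewrite ssum_empty; auto; lia.
  - destruct (le_lt_dec m (S n)) as [Hm|Hm].
    + destruct (Nat.eq_dec m (S n)) as [->|Hne].
      * rewrite ssum_nn. apply RInt_ext'. intros; rewrite ssum_nn; auto.
      * rewrite ssum_nS by lia. rewrite <- IH.
        rewrite (RInt_ext' _ (fun x => 1 * sum_n_m (fun k => f k x) m n + 1 * f (S n) x)).
        rewrite RInt_lin2. req; ring. apply Cont_sum; auto. apply H.
        intros; rewrite ssum_nS by lia; ring.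
    + rewrite ssum_empty by lia. rewrite (RInt_ext' _ (fun _ => 0)).
      rewrite RInt_const. unfold scal; simpl; unfold mult; simpl; ring.
      intros; rewrite ssum_empty; auto; lia.
Qed.

Definition dsum N (f : nat -> nat -> R) := sum_n_m (fun i => sum_n_m (fun j => f i j) 1 N) 0 N.

Lemma dsum_plus N f h : dsum N (fun i j => f i j + h i j) = dsum N f + dsum N h.
Proof.
  unfold dsum. rewrite <- ssum_plus. apply ssum_ext. intros; apply ssum_plus.
Qed.
Lemma dsum_scal N f c : dsum N (fun i j => c * f i j) = c * dsum N f.
Proof.
  unfold dsum. rewrite <- ssum_scal. apply ssum_ext. intros; apply ssum_scal.
Qed.
Lemma dsum_ext N f h : (forall i j, (i <= N)%nat -> (1 <= j <= N)%nat -> f i j = h i j) -> dsum N f = dsum N h.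
Proof.
  intros H. unfold dsum. apply ssum_ext. intros i Hi. apply ssum_ext. intros j Hj. apply H; lia.
Qed.
Lemma dsum_zero N f : (forall i j, (i <= N)%nat -> (1 <= j <= N)%nat -> f i j = 0) -> dsum N f = 0.
Proof.
  intros H. unfold dsum. apply ssum_zero. intros i Hi. apply ssum_zero. intros j Hj. apply H; lia.
Qed.

Definition Bf (h : nat -> R -> R) (e : nat) i j r := r ^ (2 * i) * Tg (h i) (2 * j - 1) r / r ^ e.
Definition SF (h : nat -> R -> R) (e : nat) (c : nat -> nat -> R) N r := dsum N (fun i j => c i j * Bf h e i j r).

Lemma Bf_deriv h e i j r : Cont (h i) -> r <> 0 ->
  is_derive (Bf h e i j) r ((INR (2 * i) - INR e - INR (2 * j - 1)) * Bf h e i j r / r + r ^ (2 * i) * h i r / r ^ e).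
Proof.
  intros Hh Hr. unfold Bf.
  pose proof (Tg_deriv (h i) (2 * j - 1) r Hh Hr) as HT.
  assert (He : r ^ e <> 0) by (apply pow_nonzero; auto).
  apply is_derive_eq with ((INR (2 * i) * 1 * r ^ Init.Nat.pred (2 * i) * Tg (h i) (2 * j - 1) r
      + r ^ (2 * i) * (h i r - INR (2 * j - 1) / r * Tg (h i) (2 * j - 1) r)) * / r ^ e
      + r ^ (2 * i) * Tg (h i) (2 * j - 1) r * (- (INR e * 1 * r ^ Init.Nat.pred e) / (r ^ e) ^ 2)).
  - apply (isd_mult (fun s => s ^ (2 * i) * Tg (h i) (2 * j - 1) s) (fun s => / s ^ e)).
    + apply (isd_mult (fun s => s ^ (2 * i))). apply (is_derive_pow (fun s => s)). apply isd_id. auto.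
    + apply is_derive_inv; auto. apply (is_derive_pow (fun s => s)). apply isd_id.
  - req. rewrite !Rmult_1_r. rewrite !pow_pred; auto. field. split; auto.
Qed.

Lemma SF_deriv h e c N r : (forall i, Cont (h i)) -> r <> 0 ->
  is_derive (SF h e c N) r
    (dsum N (fun i j => c i j * ((INR (2 * i) - INR e - INR (2 * j - 1)) * Bf h e i j r / r))
     + sum_n_m (fun i => sum_n_m (fun j => c i j) 1 N * (r ^ (2 * i) * h i r / r ^ e)) 0 N).
Proof.
  intros Hh Hr. unfold SF, dsum.
  apply is_derive_eq with (sum_n_m (fun i => sum_n_m (fun j => c i j *
     ((INR (2 * i) - INR e - INR (2 * j - 1)) * Bf h e i j r / r + r ^ (2 * i) * h i r / r ^ e)) 1 N) 0 N).
  - apply (isd_sum (fun i y => sum_n_m (fun j => c i j * Bf h e i j y) 1 N)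
                   (fun i y => sum_n_m (fun j => c i j *
     ((INR (2 * i) - INR e - INR (2 * j - 1)) * Bf h e i j y / y + y ^ (2 * i) * h i y / y ^ e)) 1 N)).
    intros i _. apply (isd_sum (fun j y => c i j * Bf h e i j y)
       (fun j y => c i j * ((INR (2 * i) - INR e - INR (2 * j - 1)) * Bf h e i j y / y + y ^ (2 * i) * h i y / y ^ e))).
    intros j _. apply isd_scal. apply Bf_deriv; auto.
  - rewrite <- ssum_plus. apply ssum_ext. intros i _.
    rewrite <- ssum_scal_r. rewrite <- ssum_plus. apply ssum_ext. intros j _. ring.
Qed.

Lemma SF_van h e c N r c0 : (forall i u, Rabs u < c0 -> h i u = 0) -> 0 < r < c0 -> SF h e c N r = 0.
Proof.
  intros Hh Hr. unfold SF. apply dsum_zero. intros i j _ _. unfold Bf.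
  rewrite (Tg_van (h i) _ r c0); auto. unfold Rdiv; ring.
Qed.

Definition arr := nat -> nat -> R.

Definition lowA k (a b : arr) i j :=
  (a i j * (2 * INR i - 2 * INR j - 2 * INR k) - 2 * b i j) / (2 * INR i - 2 * INR j + 2 * INR k + 2).
Definition topA k (a b : arr) i :=
  sum_n_m (fun j => a i j) 1 (k + i) - sum_n_m (fun j => lowA k a b i j) 1 (k + i)
  - (if (i =? 0)%nat then 8 * INR k + 4 else 0).
Definition newA k (a b : arr) : arr := fun i j =>
  if (j <? S k + i)%nat then lowA k a b i j
  else if (j =? S k + i)%nat then topA k a b i else 0.

Definition gam (a' : arr) i j := if (i =? 0)%nat then 0 else a' (pred i) j.
Definition lowB k (a' b : arr) i j :=
  (2 * gam a' i j + b i j * (2 * INR i - 2 * INR j - 2 * INR k - 2)) / (2 * INR i - 2 * INR j + 2 * INR k + 2).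
Definition topB k (a' b : arr) i :=
  sum_n_m (fun j => b i j) 1 (k + i) + (if (i =? 1)%nat then 4 else 0)
  - sum_n_m (fun j => lowB k a' b i j) 1 (k + i).
Definition newB k (a' b : arr) : arr := fun i j =>
  if (i =? 0)%nat then 0
  else if (j <? S k + i)%nat then lowB k a' b i j
  else if (j =? S k + i)%nat then topB k a' b i else 0.

Definition beta0 : arr := fun i j => if andb (i =? 1)%nat (j =? 1)%nat then 2 else 0.

Fixpoint AB (k : nat) : arr * arr :=
  match k with
  | O => ((fun _ _ => 0), beta0)
  | S k => let (a, b) := AB k in let a' := newA k a b in (a', newB k a' b)
  end.

Definition alpha k := fst (AB k).
Definition beta k := snd (AB k).

Lemma alpha_S k : alpha (S k) = newA k (alpha k) (beta k).
Proof. unfold alpha, beta; simpl. destruct (AB k); reflexivity. Qed.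
Lemma beta_S k : beta (S k) = newB k (alpha (S k)) (beta k).
Proof. rewrite alpha_S. unfold alpha, beta; simpl. destruct (AB k); reflexivity. Qed.
Lemma alpha_0 i j : alpha 0 i j = 0.
Proof. reflexivity. Qed.
Lemma beta_0 i j : beta 0 i j = beta0 i j.
Proof. reflexivity. Qed.

Lemma supp k : (forall i j, ((k < i)%nat \/ (k + i < j)%nat) -> alpha k i j = 0) /\
               (forall i j, (i = 0%nat \/ (S k < i)%nat \/ (k + i < j)%nat) -> beta k i j = 0).
Proof.
  induction k as [|k [IHa IHb]].
  - split; intros i j H. apply alpha_0.
    rewrite beta_0. unfold beta0.
    destruct (i =? 1)%nat eqn:E1; destruct (j =? 1)%nat eqn:E2; simpl; auto.
    apply Nat.eqb_eq in E1; apply Nat.eqb_eq in E2. lia.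
  - assert (HA : forall i j, ((S k < i)%nat \/ (S k + i < j)%nat) -> alpha (S k) i j = 0).
    { intros i j H. rewrite alpha_S. unfold newA.
      destruct (j <? S k + i)%nat eqn:E1.
      - apply Nat.ltb_lt in E1. destruct H as [H|H]; [|lia].
        unfold lowA. rewrite IHa, IHb by lia. unfold Rdiv; ring.
      - destruct (j =? S k + i)%nat eqn:E2; auto.
        apply Nat.eqb_eq in E2. destruct H as [H|H]; [|lia].
        unfold topA. rewrite ssum_zero. rewrite ssum_zero.
        destruct (i =? 0)%nat eqn:E3. apply Nat.eqb_eq in E3; lia. ring.
        intros; unfold lowA. rewrite IHa, IHb by lia. unfold Rdiv; ring.
        intros; apply IHa; lia. }
    split; auto.
    intros i j H. rewrite beta_S. unfold newB.
    destruct (i =? 0)%nat eqn:E0; auto.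
    apply Nat.eqb_neq in E0.
    destruct (j <? S k + i)%nat eqn:E1.
    + apply Nat.ltb_lt in E1. destruct H as [H|[H|H]]; try lia.
      unfold lowB, gam. rewrite HA, IHb by lia.
      destruct (i =? 0)%nat; unfold Rdiv; ring.
    + destruct (j =? S k + i)%nat eqn:E2; auto.
      apply Nat.eqb_eq in E2. destruct H as [H|[H|H]]; try lia.
      unfold topB. rewrite ssum_zero. rewrite ssum_zero.
      destruct (i =? 1)%nat eqn:E3. apply Nat.eqb_eq in E3; lia. ring.
      intros; unfold lowB, gam. rewrite HA, IHb by lia. destruct (i =? 0)%nat; unfold Rdiv; ring.
      intros; apply IHb; lia.
Qed.

Lemma den_pos i j k : (j < S k + i)%nat -> 0 < 2 * INR i - 2 * INR j + 2 * INR k + 2.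
Proof.
  intros H. assert (H' : (j <= k + i)%nat) by lia. apply le_INR in H'. rewrite plus_INR in H'. lra.
Qed.
Lemma den_zero i j k : j = (S k + i)%nat -> 2 * INR i - 2 * INR j + 2 * INR k + 2 = 0.
Proof. intros ->. rewrite plus_INR, S_INR. ring. Qed.

Lemma CA k i j : alpha (S k) i j * (2 * INR i - 2 * INR j + 2 * INR k + 2) =
   alpha k i j * (2 * INR i - 2 * INR j - 2 * INR k) - 2 * beta k i j.
Proof.
  destruct (supp k) as [Sa Sb].
  rewrite alpha_S. unfold newA.
  destruct (j <? S k + i)%nat eqn:E1.
  - apply Nat.ltb_lt in E1. pose proof (den_pos i j k E1). unfold lowA. field. lra.
  - apply Nat.ltb_ge in E1. rewrite Sa, Sb by lia.
    destruct (j =? S k + i)%nat eqn:E2.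
    + apply Nat.eqb_eq in E2. rewrite (den_zero i j k E2). ring.
    + ring.
Qed.

Lemma DA k i : sum_n_m (fun j => alpha (S k) i j) 1 (S k + i) =
   sum_n_m (fun j => alpha k i j) 1 (k + i) - (if (i =? 0)%nat then 8 * INR k + 4 else 0).
Proof.
  replace (S k + i)%nat with (S (k + i)) by lia.
  rewrite ssum_nS by lia. rewrite alpha_S.
  rewrite (ssum_ext _ (fun j => lowA k (alpha k) (beta k) i j)).
  - unfold newA. rewrite Nat.ltb_irrefl. rewrite Nat.eqb_refl. unfold topA. req. ring.
  - intros j Hj. unfold newA. destruct (j <? S k + i)%nat eqn:E; auto.
    apply Nat.ltb_ge in E; lia.
Qed.

Lemma CB k i j : beta (S k) i j * (2 * INR i - 2 * INR j + 2 * INR k + 2) =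
   2 * gam (alpha (S k)) i j + beta k i j * (2 * INR i - 2 * INR j - 2 * INR k - 2).
Proof.
  destruct (supp k) as [Sa Sb]. destruct (supp (S k)) as [Sa' Sb'].
  rewrite beta_S. unfold newB.
  destruct (i =? 0)%nat eqn:E0.
  - apply Nat.eqb_eq in E0. unfold gam. rewrite E0. simpl. rewrite Sb by lia. ring.
  - apply Nat.eqb_neq in E0.
    destruct (j <? S k + i)%nat eqn:E1.
    + apply Nat.ltb_lt in E1. pose proof (den_pos i j k E1). unfold lowB. field. lra.
    + apply Nat.ltb_ge in E1. unfold gam. destruct (i =? 0)%nat eqn:E3.
      { apply Nat.eqb_eq in E3; lia. }
      rewrite Sa', Sb by lia.
      destruct (j =? S k + i)%nat eqn:E2.
      * apply Nat.eqb_eq in E2. rewrite (den_zero i j k E2). ring.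
      * ring.
Qed.

Lemma DB k i : (1 <= i)%nat -> sum_n_m (fun j => beta (S k) i j) 1 (S k + i) =
   sum_n_m (fun j => beta k i j) 1 (k + i) + (if (i =? 1)%nat then 4 else 0).
Proof.
  intros Hi.
  replace (S k + i)%nat with (S (k + i)) by lia.
  rewrite ssum_nS by lia. rewrite beta_S.
  rewrite (ssum_ext _ (fun j => lowB k (alpha (S k)) (beta k) i j)).
  - unfold newB. destruct (i =? 0)%nat eqn:E0. apply Nat.eqb_eq in E0; lia.
    rewrite Nat.ltb_irrefl. rewrite Nat.eqb_refl. unfold topB. req; ring.
  - intros j Hj. unfold newB. destruct (i =? 0)%nat eqn:E0. apply Nat.eqb_eq in E0; lia.
    destruct (j <? S k + i)%nat eqn:E; auto.
    apply Nat.ltb_ge in E; lia.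
Qed.

Lemma CB0 i j : beta 0 i j * (2 * INR i - 2 * INR j) = 0.
Proof.
  rewrite beta_0. unfold beta0.
  destruct (i =? 1)%nat eqn:E1; destruct (j =? 1)%nat eqn:E2; simpl; try ring.
  apply Nat.eqb_eq in E1; apply Nat.eqb_eq in E2. subst. ring.
Qed.

Lemma DB0 i : sum_n_m (fun j => beta 0 i j) 1 i = (if (i =? 1)%nat then 2 else 0).
Proof.
  destruct (i =? 1)%nat eqn:E1.
  - apply Nat.eqb_eq in E1. subst. rewrite ssum_nn. reflexivity.
  - apply ssum_zero. intros j Hj. rewrite beta_0. unfold beta0. rewrite E1. reflexivity.
Qed.

Lemma INR_2i i : INR (2 * i) = 2 * INR i.
Proof. rewrite mult_INR; reflexivity. Qed.
Lemma INR_2jm1 j : (1 <= j)%nat -> INR (2 * j - 1) = 2 * INR j - 1.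
Proof. intros H. rewrite minus_INR by lia. rewrite mult_INR. reflexivity. Qed.

Lemma ode (X Y dX dY : R -> R) (n : nat) c : 0 < c ->
  (forall r, 0 < r -> is_derive X r (dX r)) ->
  (forall r, 0 < r -> is_derive Y r (dY r)) ->
  (forall r, 0 < r < c -> X r = Y r) ->
  (forall r, 0 < r -> r * dX r + INR n * X r = r * dY r + INR n * Y r) ->
  forall r, 0 < r -> X r = Y r.
Proof.
  intros Hc HX HY H0 HE r Hr.
  destruct (Rlt_dec r c) as [Hrc|Hrc]. apply H0; lra.
  set (h := fun s => s ^ n * (X s - Y s)).
  assert (Dh : forall s, 0 < s -> is_derive h s 0).
  { intros s Hs. unfold h.
    apply is_derive_eq with (INR n * 1 * s ^ Init.Nat.pred n * (X s - Y s) + s ^ n * (dX s - dY s)).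
    - apply (isd_mult (fun s => s ^ n) (fun s => X s - Y s)).
      apply (is_derive_pow (fun s => s)). apply isd_id. apply isd_minus; auto.
    - rewrite Rmult_1_r, pow_pred by lra. specialize (HE s Hs).
      assert (E : INR n * s ^ n / s * (X s - Y s) + s ^ n * (dX s - dY s) =
                  s ^ n / s * (s * dX s + INR n * X s - (s * dY s + INR n * Y s))) by (field; lra).
      rewrite E, HE. req; ring. }
  destruct (MVT_gen h (c / 2) r (fun _ => 0)) as [xi [Hxi Exi]].
  - intros x Hx. rewrite Rmin_left in Hx by lra. apply Dh. lra.
  - intros x Hx. rewrite Rmin_left in Hx by lra. rewrite Rmax_right in Hx by lra.
    apply continuity_pt_filterlim. apply (ex_derive_continuous (K := R_AbsRing) (V := R_NormedModule) h).
    exists 0. apply Dh. lra.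
  - assert (h (c / 2) = 0). { unfold h. rewrite H0. ring. lra. }
    assert (h r = 0) by lra. unfold h in H1.
    assert (r ^ n <> 0) by (apply pow_nonzero; lra).
    apply Rmult_integral in H1. destruct H1; [contradiction|lra].
Qed.

Lemma deriv_eq_loc (F G : R -> R) r a b : (forall s, 0 < s -> F s = G s) -> 0 < r ->
  is_derive F r a -> is_derive G r b -> a = b.
Proof.
  intros E Hr HF HG.
  assert (HG' : is_derive G r a).
  { apply is_derive_ext_loc with F; auto.
    exists (mkposreal _ Hr). intros s Hs. apply E.
    unfold ball in Hs; simpl in Hs. unfold AbsRing_ball, abs, minus, plus, opp in Hs; simpl in Hs.
    apply Rabs_def2 in Hs. lra. }
  rewrite <- (is_derive_unique _ _ _ HG'). apply is_derive_unique; auto.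
Qed.

Lemma Tg_ext h1 h2 n r : (forall u, h1 u = h2 u) -> Tg h1 n r = Tg h2 n r.
Proof. intros E. unfold Tg. apply RInt_ext'. intros; rewrite E; auto. Qed.

Definition dSF h e c N r :=
  dsum N (fun i j => c i j * ((INR (2 * i) - INR e - INR (2 * j - 1)) * Bf h e i j r / r))
  + sum_n_m (fun i => sum_n_m (fun j => c i j) 1 N * (r ^ (2 * i) * h i r / r ^ e)) 0 N.

Lemma SF_rdY h e c N r q : r <> 0 ->
  r * dSF h e c N r + q * SF h e c N r =
  dsum N (fun i j => c i j * (2 * INR i - INR e - 2 * INR j + 1 + q) * Bf h e i j r)
  + sum_n_m (fun i => sum_n_m (fun j => c i j) 1 N * (r ^ (2 * i) * h i r / r ^ e * r)) 0 N.
Proof.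
  intros Hr. unfold dSF, SF.
  rewrite Rmult_plus_distr_l. rewrite <- !dsum_scal. rewrite <- ssum_scal.
  assert (forall A B C D : R, A = C -> B = D -> A + B = C + D) as Hp by (intros; subst; auto).
  rewrite Rplus_assoc, (Rplus_comm (sum_n_m _ 0 N)), <- Rplus_assoc.
  apply Hp.
  - rewrite <- dsum_plus. apply dsum_ext. intros i j Hi Hj.
    rewrite INR_2i, INR_2jm1 by lia. field; auto.
  - apply ssum_ext. intros; field. apply pow_nonzero; auto.
Qed.

Lemma sumNA1 k i N : (k + i <= N)%nat ->
  sum_n_m (fun j => alpha k i j) 1 N = sum_n_m (fun j => alpha k i j) 1 (k + i).
Proof. intros H. symmetry. apply ssum_extend; auto. intros; apply (proj1 (supp k)); lia. Qed.
Lemma sumNA2 k i N : (k < i)%nat -> sum_n_m (fun j => alpha k i j) 1 N = 0.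
Proof. intros H. apply ssum_zero. intros; apply (proj1 (supp k)); lia. Qed.
Lemma sumNB1 k i N : (k + i <= N)%nat ->
  sum_n_m (fun j => beta k i j) 1 N = sum_n_m (fun j => beta k i j) 1 (k + i).
Proof. intros H. symmetry. apply ssum_extend; auto. intros; apply (proj2 (supp k)); lia. Qed.
Lemma sumNB2 k i N : (S k < i \/ i = 0)%nat -> sum_n_m (fun j => beta k i j) 1 N = 0.
Proof. intros H. apply ssum_zero. intros; apply (proj2 (supp k)); lia. Qed.

Lemma DA_N k i N : (2 * S k <= N)%nat ->
  sum_n_m (fun j => alpha (S k) i j) 1 N =
  sum_n_m (fun j => alpha k i j) 1 N - (if (i =? 0)%nat then 8 * INR k + 4 else 0).
Proof.
  intros HN. destruct (le_lt_dec (S k + i) N) as [H|H].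
  - rewrite (sumNA1 (S k)), (sumNA1 k) by lia. apply DA.
  - rewrite !sumNA2 by lia. destruct (i =? 0)%nat eqn:E. apply Nat.eqb_eq in E; lia. (try req); ring.
Qed.

Lemma DB_N k i N : (2 * S k + 1 <= N)%nat ->
  sum_n_m (fun j => beta (S k) i j) 1 N =
  sum_n_m (fun j => beta k i j) 1 N + (if (i =? 1)%nat then 4 else 0).
Proof.
  intros HN. destruct (Nat.eq_dec i 0) as [->|Hi0].
  - rewrite !sumNB2 by lia. simpl. (try req); ring.
  - destruct (le_lt_dec (S k + i) N) as [H|H].
    + rewrite (sumNB1 (S k)), (sumNB1 k) by lia. apply DB. lia.
    + rewrite !sumNB2 by lia. destruct (i =? 1)%nat eqn:E. apply Nat.eqb_eq in E; lia. (try req); ring.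
Qed.

Lemma DB0_N i N : (1 <= N)%nat ->
  sum_n_m (fun j => beta 0 i j) 1 N = (if (i =? 1)%nat then 2 else 0).
Proof.
  intros HN. destruct (i =? 1)%nat eqn:E.
  - apply Nat.eqb_eq in E. subst. rewrite <- (ssum_extend _ 1 1 N); auto.
    rewrite ssum_nn. reflexivity.
    intros. rewrite beta_0. unfold beta0. destruct (k =? 1)%nat eqn:E2. apply Nat.eqb_eq in E2; lia.
    simpl. destruct (1 =? 1)%nat; reflexivity.
  - apply ssum_zero. intros j Hj. rewrite beta_0. unfold beta0. rewrite E. reflexivity.
Qed.

Lemma esumA k N (E : nat -> R) : (2 * S k <= N)%nat ->
  sum_n_m (fun i => sum_n_m (fun j => alpha (S k) i j) 1 N * E i) 0 N =
  sum_n_m (fun i => sum_n_m (fun j => alpha k i j) 1 N * E i) 0 N - (8 * INR k + 4) * E 0%nat.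
Proof.
  intros HN. rewrite !(ssum_Sn _ 0 N) by lia.
  rewrite DA_N by lia. simpl.
  rewrite (ssum_ext (fun i => sum_n_m (fun j => alpha (S k) i j) 1 N * E i)
                    (fun i => sum_n_m (fun j => alpha k i j) 1 N * E i)).
  - (try req); ring.
  - intros i Hi. rewrite DA_N by lia. destruct (i =? 0)%nat eqn:Ei. apply Nat.eqb_eq in Ei; lia. (try req); ring.
Qed.

Lemma esumB k N (E : nat -> R) : (2 * S k + 1 <= N)%nat ->
  sum_n_m (fun i => sum_n_m (fun j => beta (S k) i j) 1 N * E i) 0 N =
  sum_n_m (fun i => sum_n_m (fun j => beta k i j) 1 N * E i) 0 N + 4 * E 1%nat.
Proof.
  intros HN. rewrite !(ssum_Sn _ 0 N) by lia.
  rewrite (ssum_Sn (fun i => sum_n_m (fun j => beta (S k) i j) 1 N * E i) 1 N) by lia.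
  rewrite (ssum_Sn (fun i => sum_n_m (fun j => beta k i j) 1 N * E i) 1 N) by lia.
  rewrite !(DB_N k) by lia. simpl.
  rewrite (ssum_ext (fun i => sum_n_m (fun j => beta (S k) i j) 1 N * E i)
                    (fun i => sum_n_m (fun j => beta k i j) 1 N * E i)).
  - (try req); ring.
  - intros i Hi. rewrite DB_N by lia. destruct (i =? 1)%nat eqn:Ei. apply Nat.eqb_eq in Ei; lia. (try req); ring.
Qed.

Lemma esumB0 N (E : nat -> R) : (1 <= N)%nat ->
  sum_n_m (fun i => sum_n_m (fun j => beta 0 i j) 1 N * E i) 0 N = 2 * E 1%nat.
Proof.
  intros HN. rewrite !(ssum_Sn _ 0 N) by lia.
  rewrite (ssum_Sn (fun i => sum_n_m (fun j => beta 0 i j) 1 N * E i) 1 N) by lia.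
  rewrite !DB0_N by lia. simpl. rewrite ssum_zero. (try req); ring.
  intros i Hi. rewrite DB0_N by lia. destruct (i =? 1)%nat eqn:Ei. apply Nat.eqb_eq in Ei; lia. (try req); ring.
Qed.

Definition hA g p := fun i u => D g p (2 * i) u.
Definition hB g p := fun i u => D g p (2 * i - 1) u.

Lemma shiftA g p (b : arr) N r : r <> 0 -> (forall j, b 0%nat j = 0) ->
  r * SF (hB (dx g) p) 2 b N r = dsum N (fun i j => b i j * Bf (hA g p) 1 i j r).
Proof.
  intros Hr Hb. unfold SF. rewrite <- dsum_scal. apply dsum_ext. intros i j Hi Hj.
  destruct i as [|i].
  - rewrite Hb. ring.
  - unfold Bf, hA, hB. rewrite (Tg_ext _ (fun u => D g p (2 * S i) u)).
    + field; auto.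
    + intros u. rewrite D_dx. f_equal. lia.
Qed.

Lemma shiftB g p (a : arr) N r : r <> 0 -> (forall j, a N j = 0) ->
  r * SF (hA (dx g) p) 1 a N r = dsum N (fun i j => gam a i j * Bf (hB g p) 2 i j r).
Proof.
  intros Hr Ha. unfold SF, dsum. rewrite <- ssum_scal.
  set (G := fun i => sum_n_m (fun j => gam a i j * Bf (hB g p) 2 i j r) 1 N).
  rewrite (ssum_ext _ (fun i => G (S i))).
  - rewrite ssum_shift. rewrite ssum_nS by lia. rewrite (ssum_Sn G 0 N) by lia.
    assert (G0 : G 0%nat = 0). { unfold G. apply ssum_zero. intros; unfold gam; simpl; ring. }
    assert (GN : G (S N) = 0). { unfold G. apply ssum_zero. intros; unfold gam; simpl. rewrite Ha; ring. }
    rewrite G0, GN. ring.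
  - intros i Hi. unfold G. rewrite <- ssum_scal. apply ssum_ext. intros j Hj.
    unfold gam. simpl (S i =? 0)%nat. simpl pred.
    unfold Bf, hA, hB. rewrite (Tg_ext _ (fun u => D g p (2 * S i - 1) u)).
    + replace (2 * S i)%nat with (S (S (2 * i))) by lia. simpl pow. field. auto.
    + intros u. rewrite D_dx. f_equal. lia.
Qed.

Definition PA c N k := forall g, HypC c g -> forall p r, 0 < r ->
  a_coef g (2 * k) p r = 2 * Mf g p r + SF (hA g p) 1 (alpha k) N r.
Definition PB c N k := forall g, HypC c g -> forall p r, 0 < r ->
  b_coef g (2 * k + 1) p r = SF (hB g p) 2 (beta k) N r.

Lemma Cont_hA c g (H : HypC c g) p i : Cont (hA g p i).
Proof. apply (Cont_D c); auto. Qed.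
Lemma Cont_hB c g (H : HypC c g) p i : Cont (hB g p i).
Proof. apply (Cont_D c); auto. Qed.

Lemma van_hA c g (H : HypC c g) p i u : Rabs u < c -> hA g p i u = 0.
Proof. intros; apply (D_van c); auto. Qed.
Lemma van_hB c g (H : HypC c g) p i u : Rabs u < c -> hB g p i u = 0.
Proof. intros; apply (D_van c); auto. Qed.

Lemma PA0 c N : PA c N 0.
Proof.
  intros g Hg p r Hr. rewrite a_Iw, Mf_Iw.
  unfold SF. rewrite dsum_zero.
  - unfold Iw, cs. rewrite (RInt_ext' _ (fun t => fcirc g p r t * 1)).
    + pose proof PI_RGT_0. field. lra.
    + intros t. simpl. rewrite Rmult_0_l, cos_0. ring.
  - intros; rewrite alpha_0; ring.
Qed.

Lemma dX_b g (H : smooth2 g) n p s : is_derive (fun r => b_coef g n p r) s (/ PI * Ir g p s (sn n)).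
Proof. apply isd_scal. apply (Iw_dr g H (sn n)). apply Cont_sn. Qed.
Lemma dX_a g (H : smooth2 g) n p s : is_derive (fun r => a_coef g n p r) s (/ PI * Ir g p s (cs n)).
Proof. apply isd_scal. apply (Iw_dr g H (cs n)). apply Cont_cs. Qed.

Lemma absr r c : 0 < r < c -> Rabs r < c.
Proof. intros; rewrite Rabs_right; lra. Qed.

Lemma PB0 c N : (1 <= N)%nat -> PB c N 0.
Proof.
  intros HN g Hg p r Hr. pose proof Hg as [Hs [Hc _]].
  replace (2 * 0 + 1)%nat with 1%nat by lia.
  apply (ode (fun r => b_coef g 1 p r) (SF (hB g p) 2 (beta 0) N)
             (fun r => / PI * Ir g p r (sn 1)) (dSF (hB g p) 2 (beta 0) N) 1 c); auto.
  - intros s _. apply dX_b; auto.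
  - intros s Hs'. apply SF_deriv. intros; apply (Cont_hB c); auto. lra.
  - intros s Hs'. rewrite b_Iw, (Iw_van c); auto. rewrite (SF_van _ _ _ _ _ c). ring.
    intros; apply (van_hB c); auto. auto. apply absr; auto.
  - intros s Hs'. assert (Hs0 : s <> 0) by lra.
    rewrite SF_rdY by auto.
    rewrite esumB0 by auto.
    rewrite dsum_zero.
    2: { intros i j _ _. replace (beta 0 i j * (2 * INR i - INR 2 - 2 * INR j + 1 + INR 1))
           with (beta 0 i j * (2 * INR i - 2 * INR j)) by (simpl; ring).
         rewrite CB0. ring. }
    pose proof (rel_C0 g Hs p s Hs0) as E.
    rewrite b_Iw. unfold hB. simpl (2 * 1 - 1)%nat.
    unfold D. simpl dxn. rewrite Mf_Iw. rewrite E. pose proof PI_RGT_0. simpl INR. replace (2 * 1)%nat with 2%nat by reflexivity. req. field. lra.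
Qed.

Lemma dY_a c g (Hg : HypC c g) k N p s : 0 < s ->
  is_derive (fun r => 2 * Mf g p r + SF (hA g p) 1 (alpha k) N r) s
            (2 * (/ (2 * PI) * Ir g p s (fun _ => 1)) + dSF (hA g p) 1 (alpha k) N s).
Proof.
  intros Hs'. pose proof Hg as [Hs _].
  apply isd_plus. apply isd_scal. apply Mf_dr; auto.
  apply SF_deriv. intros; apply (Cont_hA c); auto. lra.
Qed.

Lemma stepA c N k : (2 * S k + 1 <= N)%nat -> PA c N k -> PB c N k -> PA c N (S k).
Proof.
  intros HN IHa IHb g Hg p r Hr. pose proof Hg as [Hs [Hc _]].
  apply (ode (fun r => a_coef g (2 * S k) p r) (fun r => 2 * Mf g p r + SF (hA g p) 1 (alpha (S k)) N r)
             (fun r => / PI * Ir g p r (cs (2 * S k)))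
             (fun r => 2 * (/ (2 * PI) * Ir g p r (fun _ => 1)) + dSF (hA g p) 1 (alpha (S k)) N r)
             (2 * S k) c); auto.
  - intros s _. apply dX_a; auto.
  - intros s Hs'. apply (dY_a c); auto.
  - intros s Hs'. rewrite a_Iw, (Iw_van c); auto. rewrite Mf_Iw, (Iw_van c); auto.
    rewrite (SF_van _ _ _ _ _ c). ring.
    intros; apply (van_hA c); auto. auto. apply absr; auto. apply absr; auto.
  - intros s Hs'. assert (Hs0 : s <> 0) by lra. cbv beta.
    pose proof (IHa g Hg p s Hs') as Ha.
    pose proof (deriv_eq_loc (fun r => a_coef g (2 * k) p r)
                  (fun r => 2 * Mf g p r + SF (hA g p) 1 (alpha k) N r) s _ _
                  (IHa g Hg p) Hs' (dX_a g Hs (2 * k) p s) (dY_a c g Hg k N p s Hs')) as Hda.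
    pose proof (IHb (dx g) (HypC_dx c g Hg) p s Hs') as Hb.
    pose proof (rel_S g Hs p s (2 * k) Hs0) as Hrel.
    pose proof (SF_rdY (hA g p) 1 (alpha (S k)) N s (INR (2 * S k)) Hs0) as E1.
    pose proof (SF_rdY (hA g p) 1 (alpha k) N s (- INR (2 * k)) Hs0) as E2.
    assert (Hb0 : forall j, beta k 0%nat j = 0) by (intros; apply (proj2 (supp k)); lia).
    pose proof (shiftA g p (beta k) N s Hs0 Hb0) as E3.
    assert (E4 : dsum N (fun i j => alpha (S k) i j * (2 * INR i - INR 1 - 2 * INR j + 1 + INR (2 * S k)) * Bf (hA g p) 1 i j s)
               = dsum N (fun i j => alpha k i j * (2 * INR i - INR 1 - 2 * INR j + 1 + - INR (2 * k)) * Bf (hA g p) 1 i j s)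
                 - 2 * dsum N (fun i j => beta k i j * Bf (hA g p) 1 i j s)).
    { rewrite <- dsum_scal. unfold Rminus. rewrite <- (Rmult_1_l (dsum N (fun i j => 2 * (beta k i j * Bf (hA g p) 1 i j s)))).
      rewrite Ropp_mult_distr_l, <- dsum_scal, <- dsum_plus. apply dsum_ext. intros i j _ _.
      pose proof (CA k i j) as C. rewrite (INR_2i (S k)), (INR_2i k), (S_INR k). change (INR 1) with 1.
      transitivity ((alpha k i j * (2 * INR i - 2 * INR j - 2 * INR k) - 2 * beta k i j) * Bf (hA g p) 1 i j s).
      + rewrite <- C. ring.
      + ring. }
    pose proof (esumA k N (fun i => s ^ (2 * i) * hA g p i s / s ^ 1 * s)) as E5.
    cbv beta in E5. specialize (E5 ltac:(lia)).
    assert (E6 : s ^ (2 * 0) * hA g p 0 s / s ^ 1 * s = Mf g p s) by (unfold hA, D; simpl; field; auto).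
    rewrite E6 in E5.
    assert (Hkey : s * Ir g p s (cs (2 * S k)) + INR (2 * S k) * Iw g p s (cs (2 * S k)) =
                   s * Ir g p s (cs (2 * k)) - INR (2 * k) * Iw g p s (cs (2 * k)) - 2 * s * Iw (dx g) p s (sn (2 * k + 1))).
    { replace (2 * S k)%nat with (S (S (2 * k))) by lia. replace (2 * k + 1)%nat with (S (2 * k)) by lia.
      rewrite Hrel. field. auto. }
    rewrite a_Iw in Ha |- *. rewrite b_Iw in Hb.
    assert (Lx : s * (/ PI * Ir g p s (cs (2 * S k))) + INR (2 * S k) * (/ PI * Iw g p s (cs (2 * S k)))
               = / PI * (s * Ir g p s (cs (2 * S k)) + INR (2 * S k) * Iw g p s (cs (2 * S k)))) by ring.
    rewrite Lx, Hkey.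
    assert (Hi1 : INR (2 * S k) = 2 * INR k + 2) by (rewrite INR_2i, S_INR; ring).
    assert (Hi2 : INR (2 * k) = 2 * INR k) by apply INR_2i.
    rewrite Hi1 in E1, E4 |- *. rewrite Hi2 in E2, E4 |- *.
    assert (L2 : / PI * (s * Ir g p s (cs (2 * k)) - 2 * INR k * Iw g p s (cs (2 * k)) - 2 * s * Iw (dx g) p s (sn (2 * k + 1)))
       = s * (/ PI * Ir g p s (cs (2 * k))) - 2 * INR k * (/ PI * Iw g p s (cs (2 * k))) - 2 * s * (/ PI * Iw (dx g) p s (sn (2 * k + 1)))) by ring.
    rewrite L2, Hda, Ha, Hb.
    lra.
Qed.

Lemma dY_b c g (Hg : HypC c g) b N p s : 0 < s ->
  is_derive (SF (hB g p) 2 b N) s (dSF (hB g p) 2 b N s).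
Proof.
  intros Hs'. apply SF_deriv. intros; apply (Cont_hB c); auto. lra.
Qed.

Lemma stepB c N k : (2 * S k + 1 <= N)%nat -> PA c N (S k) -> PB c N k -> PB c N (S k).
Proof.
  intros HN IHa IHb g Hg p r Hr. pose proof Hg as [Hs [Hc _]].
  apply (ode (fun r => b_coef g (2 * S k + 1) p r) (SF (hB g p) 2 (beta (S k)) N)
             (fun r => / PI * Ir g p r (sn (2 * S k + 1)))
             (dSF (hB g p) 2 (beta (S k)) N)
             (2 * S k + 1) c); auto.
  - intros s _. apply dX_b; auto.
  - intros s Hs'. apply (dY_b c); auto.
  - intros s Hs'. rewrite b_Iw, (Iw_van c); auto.
    rewrite (SF_van _ _ _ _ _ c). ring.
    intros; apply (van_hB c); auto. auto. apply absr; auto.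
  - intros s Hs'. assert (Hs0 : s <> 0) by lra. cbv beta.
    pose proof (IHb g Hg p s Hs') as Hb.
    pose proof (deriv_eq_loc (fun r => b_coef g (2 * k + 1) p r)
                  (SF (hB g p) 2 (beta k) N) s _ _
                  (IHb g Hg p) Hs' (dX_b g Hs (2 * k + 1) p s) (dY_b c g Hg (beta k) N p s Hs')) as Hdb.
    pose proof (IHa (dx g) (HypC_dx c g Hg) p s Hs') as Ha.
    pose proof (rel_C g Hs p s (2 * k + 1) Hs0) as Hrel.
    pose proof (SF_rdY (hB g p) 2 (beta (S k)) N s (INR (2 * S k + 1)) Hs0) as E1.
    pose proof (SF_rdY (hB g p) 2 (beta k) N s (- INR (2 * k + 1)) Hs0) as E2.
    assert (HaN : forall j, alpha (S k) N j = 0) by (intros; apply (proj1 (supp (S k))); lia).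
    pose proof (shiftB g p (alpha (S k)) N s Hs0 HaN) as E3.
    assert (E4 : dsum N (fun i j => beta (S k) i j * (2 * INR i - INR 2 - 2 * INR j + 1 + INR (2 * S k + 1)) * Bf (hB g p) 2 i j s)
               = 2 * dsum N (fun i j => gam (alpha (S k)) i j * Bf (hB g p) 2 i j s)
                 + dsum N (fun i j => beta k i j * (2 * INR i - INR 2 - 2 * INR j + 1 + - INR (2 * k + 1)) * Bf (hB g p) 2 i j s)).
    { rewrite <- dsum_scal, <- dsum_plus. apply dsum_ext. intros i j _ _.
      pose proof (CB k i j) as C.
      assert (Hi1 : INR (2 * S k + 1) = 2 * INR k + 3) by (rewrite plus_INR, INR_2i, S_INR; simpl; ring).
      assert (Hi2 : INR (2 * k + 1) = 2 * INR k + 1) by (rewrite plus_INR, INR_2i; simpl; ring).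
      rewrite Hi1, Hi2. change (INR 2) with 2.
      transitivity ((2 * gam (alpha (S k)) i j + beta k i j * (2 * INR i - 2 * INR j - 2 * INR k - 2)) * Bf (hB g p) 2 i j s).
      + rewrite <- C. ring.
      + ring. }
    pose proof (esumB k N (fun i => s ^ (2 * i) * hB g p i s / s ^ 2 * s)) as E5.
    cbv beta in E5. specialize (E5 ltac:(lia)).
    assert (E6 : s ^ (2 * 1) * hB g p 1 s / s ^ 2 * s = s * Mf (dx g) p s) by (unfold hB, D; simpl; field; auto).
    rewrite E6 in E5.
    assert (Hkey : s * Ir g p s (sn (2 * S k + 1)) + INR (2 * S k + 1) * Iw g p s (sn (2 * S k + 1)) =
                   2 * s * Iw (dx g) p s (cs (2 * S k)) + s * Ir g p s (sn (2 * k + 1)) - INR (2 * k + 1) * Iw g p s (sn (2 * k + 1))).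
    { replace (2 * S k + 1)%nat with (S (S (2 * k + 1))) by lia. replace (2 * S k)%nat with (S (2 * k + 1)) by lia.
      rewrite Hrel. field. auto. }
    rewrite b_Iw in Hb |- *. rewrite a_Iw in Ha.
    assert (Lx : s * (/ PI * Ir g p s (sn (2 * S k + 1))) + INR (2 * S k + 1) * (/ PI * Iw g p s (sn (2 * S k + 1)))
               = / PI * (s * Ir g p s (sn (2 * S k + 1)) + INR (2 * S k + 1) * Iw g p s (sn (2 * S k + 1)))) by ring.
    rewrite Lx, Hkey.
    assert (L2 : / PI * (2 * s * Iw (dx g) p s (cs (2 * S k)) + s * Ir g p s (sn (2 * k + 1)) - INR (2 * k + 1) * Iw g p s (sn (2 * k + 1)))
       = 2 * s * (/ PI * Iw (dx g) p s (cs (2 * S k))) + s * (/ PI * Ir g p s (sn (2 * k + 1))) - INR (2 * k + 1) * (/ PI * Iw g p s (sn (2 * k + 1)))) by ring.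
    rewrite L2, Hdb, Ha, Hb.
    assert (Hi1 : INR (2 * S k + 1) = 2 * INR k + 3) by (rewrite plus_INR, INR_2i, S_INR; simpl; ring).
    assert (Hi2 : INR (2 * k + 1) = 2 * INR k + 1) by (rewrite plus_INR, INR_2i; simpl; ring).
    rewrite Hi1 in E1, E4 |- *. rewrite Hi2 in E2, E4 |- *.
    lra.
Qed.

Lemma PAB c N k : (2 * k + 1 <= N)%nat -> PA c N k /\ PB c N k.
Proof.
  induction k as [|k IH]; intros HN.
  - split. apply PA0. apply PB0. lia.
  - destruct IH as [Ha Hb]. lia.
    assert (Ha' : PA c N (S k)) by (apply stepA; auto; lia).
    split; auto. apply stepB; auto; lia.
Qed.

Lemma powerRZ_m1 r i : r <> 0 -> powerRZ r (Z.of_nat (2 * i) - 1) = r ^ (2 * i) / r.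
Proof.
  intros Hr. unfold Z.sub. rewrite powerRZ_add by auto. rewrite <- pow_powerRZ.
  simpl. unfold Rdiv. f_equal. rewrite Rmult_1_r. reflexivity.
Qed.

Lemma Cont_oddpoly c n (r : R) : Cont (fun u => oddpoly c n (u / r)).
Proof.
  unfold oddpoly. apply (Cont_sum (fun j u => c j * (u / r) ^ (2 * j - 1))).
  intros j u. apply cont_mult. apply cont_const.
  apply (continuous_comp (fun u => u / r) (fun t => t ^ (2 * j - 1))).
  apply cont_mult. apply continuous_id. apply cont_const. apply Cont_pow.
Qed.

Lemma conv (h : nat -> R -> R) (Hh : forall i, Cont (h i)) (c : arr) r (w : nat -> R) m n (L : nat -> nat) :
  RInt (fun u => sum_n_m (fun i => w i * oddpoly (c i) (L i) (u / r) * h i u) m n) 0 r =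
  sum_n_m (fun i => w i * sum_n_m (fun j => c i j * Tg (h i) (2 * j - 1) r) 1 (L i)) m n.
Proof.
  rewrite (RInt_sum (fun i u => w i * oddpoly (c i) (L i) (u / r) * h i u)).
  - apply ssum_ext. intros i _.
    rewrite (RInt_ext' _ (fun u => sum_n_m (fun j => (w i * c i j) * ((u / r) ^ (2 * j - 1) * h i u)) 1 (L i))).
    + rewrite (RInt_sum (fun j u => (w i * c i j) * ((u / r) ^ (2 * j - 1) * h i u))).
      * rewrite <- ssum_scal. apply ssum_ext. intros j _. rewrite RInt_scal'.
        unfold Tg. ring.
        apply Cont_mult; auto. intros u. apply (continuous_comp (fun u => u / r) (fun t => t ^ (2 * j - 1))).
        apply cont_mult. apply continuous_id. apply cont_const. apply Cont_pow.
      * intros j. apply Cont_mult. apply Cont_const. apply Cont_mult; auto.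
        intros u. apply (continuous_comp (fun u => u / r) (fun t => t ^ (2 * j - 1))).
        apply cont_mult. apply continuous_id. apply cont_const. apply Cont_pow.
    + intros u. unfold oddpoly. rewrite Rmult_assoc, <- ssum_scal_r, <- ssum_scal. apply ssum_ext. intros; ring.
  - intros i. apply Cont_mult; auto. apply Cont_mult. apply Cont_const. apply Cont_oddpoly.
Qed.

Lemma pow_im1 r i : r <> 0 -> (1 <= i)%nat -> r ^ (2 * (i - 1)) = r ^ (2 * i) / r ^ 2.
Proof.
  intros Hr Hi. replace (2 * i)%nat with (2 * (i - 1) + 2)%nat by lia.
  rewrite pow_add. field. auto.
Qed.

Theorem lemma1 (f : R -> R -> R) :
  smooth2 f -> compact_supp_upper f ->
  exists (cA cB : nat -> nat -> nat -> R),
    forall (p r : R) (k : nat), 0 < r -> (1 <= k)%nat ->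
      a_coef f (2 * k) p r =
        2 * Mf f p r +
        RInt (fun u =>
          sum_n_m (fun i =>
            powerRZ r (Z.of_nat (2 * i) - 1) *
            oddpoly (cA k i) (k + i) (u / r) *
            dpMf f (2 * i) p u) 0 k) 0 r
      /\
      b_coef f (2 * k - 1) p r =
        RInt (fun u =>
          sum_n_m (fun i =>
            r ^ (2 * (i - 1)) *
            oddpoly (cB k i) (k + i - 1) (u / r) *
            dpMf f (2 * i - 1) p u) 1 k) 0 r.
Proof.
  intros Hs [a [b [c [d [Hc Hz]]]]].
  assert (Hg : HypC c f).
  { split; auto. split; auto. intros x y Hy. apply Hz. intros [_ [H1 _]]. lra. }
  exists (fun k => alpha k), (fun k => beta (k - 1)).
  intros p r k Hr Hk. assert (Hr0 : r <> 0) by lra.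
  destruct k as [|k']; [lia|].
  set (N := (2 * S k' + 1)%nat).
  destruct (PAB c N (S k') ltac:(unfold N; lia)) as [HA _].
  destruct (PAB c N k' ltac:(unfold N; lia)) as [_ HB].
  destruct (supp (S k')) as [SA _]. destruct (supp k') as [_ SB].
  split.
  - rewrite (HA f Hg p r Hr). f_equal. symmetry.
    rewrite (RInt_ext' _ (fun u => sum_n_m (fun i => powerRZ r (Z.of_nat (2 * i) - 1) *
                oddpoly (alpha (S k') i) (S k' + i) (u / r) * hA f p i u) 0 (S k'))).
    2: { intros u; apply ssum_ext; intros i _. unfold hA. rewrite (dpMf_D c) by auto. reflexivity. }
    rewrite (conv (hA f p) (Cont_hA c f Hg p)).
    unfold SF, dsum.
    rewrite (ssum_extend _ 0 (S k') N).
    + apply ssum_ext. intros i Hi.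
      destruct (le_lt_dec i (S k')) as [Hik|Hik].
      * rewrite (ssum_extend _ 1 (S k' + i) N).
        -- rewrite powerRZ_m1 by auto. rewrite <- ssum_scal. apply ssum_ext. intros j _.
           unfold Bf. field. auto.
        -- unfold N; lia.
        -- intros j Hj. rewrite SA by lia. ring.
      * rewrite !ssum_zero. ring.
        intros j _. rewrite SA by lia. ring.
        intros j _. rewrite SA by lia. ring.
    + unfold N; lia.
    + intros i Hi. rewrite ssum_zero. ring. intros j _. rewrite SA by lia. ring.
  - replace (2 * S k' - 1)%nat with (2 * k' + 1)%nat by lia.
    replace (S k' - 1)%nat with k' by lia.
    rewrite (HB f Hg p r Hr). symmetry.
    rewrite (RInt_ext' _ (fun u => sum_n_m (fun i => r ^ (2 * (i - 1)) *
                oddpoly (beta k' i) (S k' + i - 1) (u / r) * hB f p i u) 1 (S k'))).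
    2: { intros u; apply ssum_ext; intros i _. unfold hB. rewrite (dpMf_D c) by auto. reflexivity. }
    rewrite (conv (hB f p) (Cont_hB c f Hg p)).
    unfold SF, dsum.
    rewrite (ssum_Sn _ 0 N) by lia.
    rewrite (ssum_zero (fun j => beta k' 0%nat j * Bf (hB f p) 2 0%nat j r)).
    2: { intros j _. rewrite SB by lia. ring. }
    rewrite Rplus_0_l.
    rewrite (ssum_extend _ 1 (S k') N).
    + apply ssum_ext. intros i Hi.
      destruct (le_lt_dec i (S k')) as [Hik|Hik].
      * rewrite (ssum_extend _ 1 (S k' + i - 1) N).
        -- rewrite pow_im1 by (auto; lia). rewrite <- ssum_scal. apply ssum_ext. intros j _.
           unfold Bf. field. auto.
        -- unfold N; lia.
        -- intros j Hj. rewrite SB by lia. ring.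
      * rewrite !ssum_zero. ring.
        intros j _. rewrite SB by lia. ring.
        intros j _. rewrite SB by lia. ring.
    + unfold N; lia.
    + intros i Hi. rewrite ssum_zero. ring. intros j _. rewrite SB by lia. ring.
Qed.
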